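(* Let $M>1$ and let $Q$ be an indefinite ternary quadratic form of Diophantine type $M$ with $\det Q=1$. Then there exists $0<\eta<1$ such that for every $R>10$ the set $\{v\in\Delta_Q\cap\mathcal{H}_{\eta,M}: R\le\|v\|<R^2\}$ is contained in the union of at most $12$ lines through the origin.
   Context: $\|\cdot\|$ is the supremum norm on $\mathbb{R}^3$; for quadratic forms $\|Q\|$ is the maximal absolute value of coefficients. $Q_0(v)=v_2^2-2v_1v_3$. Fix $g\in\mathrm{SL}_3(\mathbb{R})$ with $Q(v)=Q_0(gv)$ for all $v$ and set $\Delta_Q=g\mathbb{Z}^3$. $Q$ is of Diophantine type $M$ if there is $c>0$ with $\|Q-\rho Q'\|>c\|Q'\|^{-M}$ for every nonzero integral ternary quadratic form $Q'$, $\rho=(\det Q')^{-1/3}$. $\mathcal{H}_{\eta,M}=\{v\in\mathbb{R}^3:|Q_0(v)|<\eta\|v\|^{-50M}\}$. *)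

(* Defs.v *)
From HB Require Import structures.
From mathcomp Require Import all_boot all_order all_algebra.
From mathcomp Require Import all_classical all_reals all_analysis.
Set Implicit Arguments. Unset Strict Implicit. Unset Printing Implicit Defensive.
Import Order.TTheory GRing.Theory Num.Theory.
Local Open Scope ring_scope.

(* Ternary quadratic forms are represented by their symmetric Gram matrix S:
   Q(v) = v^T S v, for v a column vector in R^3 (indices 0,1,2 = v_1,v_2,v_3). *)
Definition qf (R : realType) (S : 'M[R]_3) (v : 'cV[R]_3) : R := (v^T *m S *m v) 0 0.

(* Gram matrix of Q_0(v) = v_2^2 - 2 v_1 v_3. *)
Definition S0 (R : realType) : 'M[R]_3 :=
  \matrix_(i < 3, j < 3)
    (if (i == 1 :> nat) && (j == 1 :> nat) then 1
     else if ((i == 0 :> nat) && (j == 2 :> nat)) || ((i == 2 :> nat) && (j == 0 :> nat))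
          then -1 else 0).

(* Coefficient of v_i v_j (i <= j) in the polynomial Q(v) = v^T S v. *)
Definition qcoef (R : realType) (S : 'M[R]_3) (i j : 'I_3) : R :=
  if i == j then S i i else S i j + S j i.

Definition qnorm (R : realType) (S : 'M[R]_3) : R :=
  \big[Num.max/0]_(i < 3) \big[Num.max/0]_(j < 3 | (i <= j)%N) `|qcoef S i j|.

Definition integral_form (R : realType) (S : 'M[R]_3) : Prop :=
  S^T = S /\ forall i j : 'I_3, (i <= j)%N -> exists z : int, qcoef S i j = z%:~R.

(* Determinant of a form, normalized so that det Q_0 = 1. *)
Definition qdet (R : realType) (S : 'M[R]_3) : R := - \det S.

Definition cbrt (R : realType) (x : R) : R :=
  if 0 <= x then powR x (3^-1) else - powR (- x) (3^-1).

Definition diophantine_type (R : realType) (M : R) (S : 'M[R]_3) : Prop :=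
  exists2 c : R, 0 < c &
    forall S' : 'M[R]_3, integral_form S' -> S' != 0 -> qdet S' != 0 ->
      qnorm (S - (cbrt (qdet S'))^-1 *: S') > c * powR (qnorm S') (- M).

Definition vnorm (R : realType) (v : 'cV[R]_3) : R :=
  \big[Num.max/0]_(i < 3) `|v i 0|.

(* Delta_Q = g Z^3 *)
Definition in_lattice (R : realType) (g : 'M[R]_3) (v : 'cV[R]_3) : Prop :=
  exists w : 'cV[int]_3, v = g *m map_mx (fun z : int => z%:~R) w.

Definition in_H (R : realType) (eta M : R) (v : 'cV[R]_3) : Prop :=
  `|qf (S0 R) v| < eta * powR (vnorm v) (- (50 * M)).

(* Main.v *)
Require Import Defs.
From mathcomp Require Import all_boot all_order all_algebra.
From mathcomp Require Import all_classical all_reals all_analysis.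
From mathcomp Require Import ring lra.
Import Order.TTheory GRing.Theory Num.Theory.
Set Implicit Arguments. Unset Strict Implicit. Unset Printing Implicit Defensive.
Local Open Scope ring_scope.

Lemma sum3 (R : realType) (f : 'I_3 -> R) : \sum_(i < 3) f i = f 0 + f 1 + f 2.
Proof.
rewrite !big_ord_recl big_ord0 addr0 addrA; congr (_ + f _ + f _); exact/val_inj.
Qed.

Lemma cV3P (R : realType) (x y : 'cV[R]_3) :
  x 0 0 = y 0 0 -> x 1 0 = y 1 0 -> x 2 0 = y 2 0 -> x = y.
Proof.
move=> h0 h1 h2; apply/matrixP => i j; rewrite (ord1 j).
case: i => [[|[|[|//]]]] Hi.
- by have -> : Ordinal Hi = 0 by exact/val_inj.
- by have -> : Ordinal Hi = 1 by exact/val_inj.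
- by have -> : Ordinal Hi = 2 by exact/val_inj.
Qed.

Lemma M3P (R : realType) (x y : 'M[R]_3) :
  (forall i j, x i j = y i j) -> x = y.
Proof. by move=> h; apply/matrixP => i j. Qed.

Lemma ord3_cases (i : 'I_3) : [\/ i = 0, i = 1 | i = 2].
Proof.
case: i => [[|[|[|//]]]] Hi.
- by constructor 1; exact/val_inj.
- by constructor 2; exact/val_inj.
- by constructor 3; exact/val_inj.
Qed.

Lemma det3 (R : realType) (A : 'M[R]_3) : \det A =
  A 0 0 * (A 1 1 * A 2 2 - A 1 2 * A 2 1)
  - A 0 1 * (A 1 0 * A 2 2 - A 1 2 * A 2 0)
  + A 0 2 * (A 1 0 * A 2 1 - A 1 1 * A 2 0).
Proof.
rewrite (expand_det_row _ 0) sum3 /cofactor.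
rewrite !(expand_det_row _ 0) !big_ord_recl !big_ord0 /cofactor.
rewrite !det_mx11 !mxE /=.
pose a := fun i j : nat => A (inord i) (inord j).
have E i j : A i j = a i j by rewrite /a !inord_val.
rewrite !E /=.
rewrite /bump /=.
ring.
Qed.

Lemma qnorm_le (R : realType) (X : 'M[R]_3) (m : R) :
  0 <= m -> (forall i j, `|X i j| <= m) -> qnorm X <= 2 * m.
Proof.
move=> m0 h; rewrite /qnorm.
apply: bigmax_le; first by rewrite mulr_ge0.
move=> i _; apply: bigmax_le; first by rewrite mulr_ge0.
move=> j _; rewrite /qcoef; case: eqP => _.
  by apply: le_trans (h i i) _; lra.
apply: le_trans (ler_normD _ _) _; have := h i j; have := h j i; lra.
Qed.

Lemma qnorm_ge (R : realType) (X : 'M[R]_3) (i j : 'I_3) :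
  (i <= j)%N -> `|qcoef X i j| <= qnorm X.
Proof.
move=> hij; rewrite /qnorm.
apply: le_trans (le_bigmax _ _ i).
exact: (le_bigmax_cond _ _ hij).
Qed.

Definition bil (R : realType) (S : 'M[R]_3) (x y : 'cV[R]_3) : R :=
  (x^T *m S *m y) 0 0.

Lemma bilE (R : realType) (S : 'M[R]_3) (x y : 'cV[R]_3) : bil S x y =
  x 0 0 * (S 0 0 * y 0 0 + S 0 1 * y 1 0 + S 0 2 * y 2 0) +
  x 1 0 * (S 1 0 * y 0 0 + S 1 1 * y 1 0 + S 1 2 * y 2 0) +
  x 2 0 * (S 2 0 * y 0 0 + S 2 1 * y 1 0 + S 2 2 * y 2 0).
Proof. rewrite /bil !mxE !sum3 !mxE !sum3 !mxE; ring. Qed.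

Definition mk3 (R : realType) (a b c : 'cV[R]_3) : 'M[R]_3 :=
  \matrix_(i < 3, j < 3)
    (if j == 0 :> nat then a i 0 else if j == 1 :> nat then b i 0 else c i 0).

Lemma mk3E0 (R : realType) (a b c : 'cV[R]_3) i : mk3 a b c i 0 = a i 0.
Proof. by rewrite mxE. Qed.
Lemma mk3E1 (R : realType) (a b c : 'cV[R]_3) i : mk3 a b c i 1 = b i 0.
Proof. by rewrite mxE. Qed.
Lemma mk3E2 (R : realType) (a b c : 'cV[R]_3) i : mk3 a b c i 2 = c i 0.
Proof. by rewrite mxE. Qed.

Definition cross (R : realType) (a b : 'cV[R]_3) : 'cV[R]_3 :=
  \col_(i < 3) (if i == 0 :> nat then a 1 0 * b 2 0 - a 2 0 * b 1 0
                else if i == 1 :> nat then a 2 0 * b 0 0 - a 0 0 * b 2 0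
                else a 0 0 * b 1 0 - a 1 0 * b 0 0).

Lemma crossE0 (R : realType) (a b : 'cV[R]_3) :
  cross a b 0 0 = a 1 0 * b 2 0 - a 2 0 * b 1 0.
Proof. by rewrite mxE. Qed.
Lemma crossE1 (R : realType) (a b : 'cV[R]_3) :
  cross a b 1 0 = a 2 0 * b 0 0 - a 0 0 * b 2 0.
Proof. by rewrite mxE. Qed.
Lemma crossE2 (R : realType) (a b : 'cV[R]_3) :
  cross a b 2 0 = a 0 0 * b 1 0 - a 1 0 * b 0 0.
Proof. by rewrite mxE. Qed.

Definition Adj3 (R : realType) (a b c : 'cV[R]_3) : 'M[R]_3 :=
  \matrix_(i < 3, j < 3)
    (if i == 0 :> nat then cross b c j 0 else if i == 1 :> nat then cross c a j 0
     else cross a b j 0).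

Definition tri (R : realType) (a b c : 'cV[R]_3) : R :=
  a 0 0 * (b 1 0 * c 2 0 - b 2 0 * c 1 0)
  + a 1 0 * (b 2 0 * c 0 0 - b 0 0 * c 2 0)
  + a 2 0 * (b 0 0 * c 1 0 - b 1 0 * c 0 0).

Lemma det_mk3 (R : realType) (a b c : 'cV[R]_3) : \det (mk3 a b c) = tri a b c.
Proof. rewrite det3 !mxE /= /tri; ring. Qed.

Lemma mk3_adj (R : realType) (a b c : 'cV[R]_3) :
  mk3 a b c *m Adj3 a b c = (tri a b c)%:M.
Proof.
apply/matrixP => i j; rewrite !mxE sum3 !mxE /= /tri.
case: (ord3_cases i) => ->; case: (ord3_cases j) => -> /=; rewrite ?mxE /=; ring.
Qed.

Lemma nm2 (R : realType) (x y a b : R) : `|x| <= a -> `|y| <= b -> `|x * y| <= a * b.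
Proof. move=> ha hb; rewrite normrM; apply: ler_pM => //. Qed.

Lemma nsum3 (R : realType) (x y z a b c : R) :
  `|x| <= a -> `|y| <= b -> `|z| <= c -> `|x + y + z| <= a + b + c.
Proof.
move=> ha hb hc; apply: le_trans (ler_normD _ _) _; apply: lerD => //.
apply: le_trans (ler_normD _ _) _; exact: lerD.
Qed.

Lemma nsub (R : realType) (x y a b : R) : `|x| <= a -> `|y| <= b -> `|x - y| <= a + b.
Proof. move=> ha hb; apply: le_trans (ler_normB _ _) _; exact: lerD. Qed.

Lemma bnd_mulmx (R : realType) m n p (A : 'M[R]_(m, n)) (B : 'M[R]_(n, p)) (a b : R) :
  (forall i j, `|A i j| <= a) -> (forall i j, `|B i j| <= b) ->
  forall i j, `|(A *m B) i j| <= n%:R * (a * b).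
Proof.
move=> hA hB i j; rewrite mxE; apply: le_trans (ler_norm_sum _ _ _) _.
apply: le_trans (ler_sum _ (fun k _ => nm2 (hA i k) (hB k j))) _.
by rewrite sumr_const card_ord mulr_natl.
Qed.

Lemma bnd_tr (R : realType) m n (A : 'M[R]_(m, n)) (a : R) :
  (forall i j, `|A i j| <= a) -> forall i j, `|A^T i j| <= a.
Proof. by move=> h i j; rewrite mxE. Qed.

Lemma bnd_conj (R : realType) (X Y : 'M[R]_3) (x y : R) :
  (forall i j, `|X i j| <= x) -> (forall i j, `|Y i j| <= y) ->
  forall i j, `|(X^T *m Y *m X) i j| <= 9 * (x ^+ 2 * y).
Proof.
move=> hX hY i j.
have h1 := bnd_mulmx (bnd_tr hX) hY.
apply: le_trans (bnd_mulmx h1 hX i j) _.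
by rewrite le_eqVlt; apply/orP; left; apply/eqP; ring.
Qed.

Definition intv (R : realType) (w : 'cV[R]_3) := forall i, w i 0 \is a Num.int.
Definition intm (R : realType) (A : 'M[R]_3) := forall i j, A i j \is a Num.int.

Lemma intm_mul (R : realType) m n p (A : 'M[R]_(m, n)) (B : 'M[R]_(n, p)) :
  (forall i j, A i j \is a Num.int) -> (forall i j, B i j \is a Num.int) ->
  forall i j, (A *m B) i j \is a Num.int.
Proof.
move=> hA hB i j; rewrite mxE; apply: rpred_sum => k _; apply: rpredM; [exact: hA|exact: hB].
Qed.

Lemma intv_cross (R : realType) (a b : 'cV[R]_3) : intv a -> intv b -> intv (cross a b).
Proof.
move=> ha hb i; case: (ord3_cases i) => ->;
  by rewrite ?crossE0 ?crossE1 ?crossE2 rpredB ?rpredM ?ha ?hb.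
Qed.

Lemma intm_Adj3 (R : realType) (a b c : 'cV[R]_3) :
  intv a -> intv b -> intv c -> intm (Adj3 a b c).
Proof.
move=> ha hb hc i j; rewrite mxE.
case: ifP => _; first exact: intv_cross.
case: ifP => _; exact: intv_cross.
Qed.

Lemma intm_mk3 (R : realType) (a b c : 'cV[R]_3) :
  intv a -> intv b -> intv c -> intm (mk3 a b c).
Proof.
move=> ha hb hc i j; rewrite mxE.
by case: ifP => _; [|case: ifP => _]; rewrite ?ha ?hb ?hc.
Qed.

Lemma int_tri (R : realType) (a b c : 'cV[R]_3) :
  intv a -> intv b -> intv c -> tri a b c \is a Num.int.
Proof.
move=> ha hb hc; rewrite /tri.
repeat (apply: rpredB || apply: rpredD || apply: rpredM).
all: (apply: ha || apply: hb || apply: hc).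
Qed.

Lemma bnd_cross (R : realType) (a b : 'cV[R]_3) (W : R) :
  (forall i, `|a i 0| <= W) -> (forall i, `|b i 0| <= W) ->
  forall i, `|cross a b i 0| <= 2 * W ^+ 2.
Proof.
move=> ha hb i.
have e : 2 * W ^+ 2 = W * W + W * W by rewrite expr2; ring.
rewrite e; case: (ord3_cases i) => ->;
  rewrite ?crossE0 ?crossE1 ?crossE2; apply: nsub; apply: nm2; auto.
Qed.

Lemma bnd_tri (R : realType) (a b c : 'cV[R]_3) (W : R) :
  (forall i, `|a i 0| <= W) -> (forall i, `|b i 0| <= W) -> (forall i, `|c i 0| <= W) ->
  `|tri a b c| <= 6 * W ^+ 3.
Proof.
move=> ha hb hc.
have e : 6 * W ^+ 3 = W * (W * W + W * W) + W * (W * W + W * W) + W * (W * W + W * W)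
  by rewrite exprS expr2; ring.
rewrite e /tri; apply: nsum3; apply: nm2; auto; apply: nsub; apply: nm2; auto.
Qed.

Lemma symE (R : realType) (S : 'M[R]_3) i j : S^T = S -> S j i = S i j.
Proof. by move=> h; rewrite -[in RHS]h mxE. Qed.

Lemma qf_mul (R : realType) (S B : 'M[R]_3) (p : 'cV[R]_3) :
  qf S (B *m p) = qf (B^T *m S *m B) p.
Proof. by rewrite /qf trmx_mul !mulmxA. Qed.

Lemma conjE (R : realType) (S B : 'M[R]_3) i j :
  (B^T *m S *m B) i j = bil S (col i B) (col j B).
Proof.
rewrite /bil !mxE; apply: eq_bigr => k _; rewrite !mxE; congr (_ * _).
by apply: eq_bigr => l _; rewrite !mxE.
Qed.

Lemma col_mk3_0 (R : realType) (a b c : 'cV[R]_3) : col 0 (mk3 a b c) = a.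
Proof. by apply/matrixP => i j; rewrite (ord1 j) !mxE. Qed.
Lemma col_mk3_1 (R : realType) (a b c : 'cV[R]_3) : col 1 (mk3 a b c) = b.
Proof. by apply/matrixP => i j; rewrite (ord1 j) !mxE. Qed.
Lemma col_mk3_2 (R : realType) (a b c : 'cV[R]_3) : col 2 (mk3 a b c) = c.
Proof. by apply/matrixP => i j; rewrite (ord1 j) !mxE. Qed.

Lemma conj_sym (R : realType) (S B : 'M[R]_3) : S^T = S -> (B^T *m S *m B)^T = B^T *m S *m B.
Proof. by move=> h; rewrite !trmx_mul trmxK h mulmxA. Qed.

Lemma qf_exp_sym (R : realType) (N : 'M[R]_3) (p : 'cV[R]_3) : N^T = N ->
  qf N p = p 0 0 ^+ 2 * N 0 0 + p 1 0 ^+ 2 * N 1 1 + p 2 0 ^+ 2 * N 2 2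
    + 2 * (p 0 0 * p 1 0 * N 0 1 + p 0 0 * p 2 0 * N 0 2 + p 1 0 * p 2 0 * N 1 2).
Proof.
move=> h; rewrite [qf _ _]bilE (symE 1 0 h) (symE 2 0 h) (symE 2 1 h); ring.
Qed.

Lemma bil_sym (R : realType) (S : 'M[R]_3) x y : S^T = S -> bil S x y = bil S y x.
Proof.
move=> h; rewrite !bilE (symE 1 0 h) (symE 2 0 h) (symE 2 1 h); ring.
Qed.

Lemma qfZ (R : realType) (S : 'M[R]_3) (k : R) x : qf S (k *: x) = k ^+ 2 * qf S x.
Proof. rewrite ![qf _ _]bilE !mxE; ring. Qed.

Lemma qf_comb (R : realType) (S : 'M[R]_3) (a b : R) x y : S^T = S ->
  qf S (a *: x + b *: y) = a ^+ 2 * qf S x + b ^+ 2 * qf S y + 2 * a * b * bil S x y.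
Proof.
move=> h; rewrite ![qf _ _]bilE !bilE !mxE (symE 1 0 h) (symE 2 0 h) (symE 2 1 h); ring.
Qed.

Lemma n3p (R : realType) (x y z a b c : R) :
  `|x| <= a -> `|y| <= b -> `|z| <= c -> `|x * y * z| <= a * b * c.
Proof. by move=> ha hb hc; apply: nm2 => //; apply: nm2. Qed.

Lemma n6 (R : realType) (t1 t2 t3 t4 t5 t6 b1 b2 b3 b4 b5 b6 : R) :
  `|t1| <= b1 -> `|t2| <= b2 -> `|t3| <= b3 -> `|t4| <= b4 -> `|t5| <= b5 -> `|t6| <= b6 ->
  `|t1 - t2 - t3 + t4 + t5 - t6| <= b1 + b2 + b3 + b4 + b5 + b6.
Proof.
move=> h1 h2 h3 h4 h5 h6.
do 5 (apply: le_trans (ler_normD _ _) _ || apply: le_trans (ler_normB _ _) _;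
  rewrite ?normrN; apply: lerD => //).
Qed.

Lemma det3' (R : realType) (A : 'M[R]_3) : \det A =
  A 0 0 * A 1 1 * A 2 2 - A 0 0 * A 1 2 * A 2 1 - A 0 1 * A 1 0 * A 2 2
  + A 0 1 * A 1 2 * A 2 0 + A 0 2 * A 1 0 * A 2 1 - A 0 2 * A 1 1 * A 2 0.
Proof. rewrite det3; ring. Qed.

Lemma det_small (R : realType) (X : 'M[R]_3) (s m : R) :
  (forall i j, `|X i j| <= m) -> `|X 0 0| <= s -> `|X 1 1| <= s -> `|X 0 1| <= s ->
  `|X 1 0| <= s -> `|\det X| <= 6 * (s * m ^+ 2).
Proof.
move=> hm h00 h11 h01 h10; rewrite det3'.
apply: le_trans (n6 (n3p h00 (hm _ _) (hm _ _)) (n3p h00 (hm _ _) (hm _ _))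
  (n3p h01 (hm _ _) (hm _ _)) (n3p h01 (hm _ _) (hm _ _)) (n3p (hm _ _) h10 (hm _ _))
  (n3p (hm _ _) h11 (hm _ _))) _.
by rewrite le_eqVlt; apply/orP; left; apply/eqP; ring.
Qed.

Lemma sq_bnd (R : realType) (x a : R) : `|x| <= a -> `|x ^+ 2| <= a * a.
Proof. by move=> h; rewrite expr2; apply: nm2. Qed.

Lemma dot_ge1 (R : realType) (u : 'cV[R]_3) : intv u -> u != 0 ->
  1 <= u 0 0 ^+ 2 + u 1 0 ^+ 2 + u 2 0 ^+ 2.
Proof.
move=> hu hn.
have s0 := sqr_ge0 (u 0 0); have s1 := sqr_ge0 (u 1 0); have s2 := sqr_ge0 (u 2 0).
have [h0|h0] := eqVneq (u 0 0) 0; last by have := sqr_intr_ge1 (hu 0) h0; lra.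
have [h1|h1] := eqVneq (u 1 0) 0; last by have := sqr_intr_ge1 (hu 1) h1; lra.
have [h2|h2] := eqVneq (u 2 0) 0; last by have := sqr_intr_ge1 (hu 2) h2; lra.
exfalso; move/eqP: hn; apply; apply: cV3P; by rewrite ?h0 ?h1 ?h2 mxE.
Qed.

Lemma W_le (R : realType) (W : R) : 1 <= W -> W <= 2 * W ^+ 2.
Proof. move=> h; rewrite expr2; nra. Qed.

Lemma PL (R : realType) (S : 'M[R]_3) (wi wj w : 'cV[R]_3) (k al be W sm eps : R) :
  S^T = S -> \det S = -1 -> (forall i j, `|S i j| <= sm) ->
  intv wi -> intv wj -> 1 <= W ->
  (forall i, `|wi i 0| <= W) -> (forall i, `|wj i 0| <= W) ->
  al \is a Num.int -> be \is a Num.int -> al != 0 -> be != 0 ->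
  `|k| <= 12 * W ^+ 4 -> `|al| <= 12 * W ^+ 4 -> `|be| <= 12 * W ^+ 4 ->
  k *: w = al *: wi + be *: wj ->
  cross wi wj != 0 ->
  `|qf S wi| <= eps -> `|qf S wj| <= eps -> `|qf S w| <= eps ->
  216 * W ^+ 8 * eps <= 36 * W ^+ 4 * sm ->
  6 * ((216 * W ^+ 8 * eps) * (36 * W ^+ 4 * sm) ^+ 2) < 1 -> False.
Proof.
move=> hS hdS hSm hi hj hW hbi hbj hal hbe hal0 hbe0 hk hal' hbe' hrel hu hqi hqj hq hsm hsmall.
have eps0 : 0 <= eps by apply: le_trans hqi.
have W8 : 1 <= W ^+ 8 by apply: exprn_ege1.
pose B := mk3 wi wj (cross wi wj).
pose N := B^T *m S *m B.
have hB : forall i j, `|B i j| <= 2 * W ^+ 2.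
  move=> i j; rewrite mxE; case: ifP => _; [|case: ifP => _].
  - by apply: le_trans (hbi i) _; apply: W_le.
  - by apply: le_trans (hbj i) _; apply: W_le.
  - exact: bnd_cross.
have hN : forall i j, `|N i j| <= 36 * W ^+ 4 * sm.
  move=> i j; apply: le_trans (bnd_conj hB hSm i j) _.
  by rewrite le_eqVlt; apply/orP; left; apply/eqP; ring.
have N00 : N 0 0 = qf S wi by rewrite /N conjE col_mk3_0.
have N11 : N 1 1 = qf S wj by rewrite /N conjE col_mk3_1.
have N01 : N 0 1 = bil S wi wj by rewrite /N conjE col_mk3_0 col_mk3_1.
have N10 : N 1 0 = bil S wi wj by rewrite /N conjE col_mk3_0 col_mk3_1 bil_sym.
have rel : k ^+ 2 * qf S w =
    al ^+ 2 * qf S wi + be ^+ 2 * qf S wj + 2 * al * be * bil S wi wj.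
  by rewrite -qfZ hrel qf_comb.
have hab : 1 <= `|al| * `|be|.
  have := norm_intr_ge1 hal hal0; have := norm_intr_ge1 hbe hbe0; nra.
have e1 : `|2 * al * be * bil S wi wj| <= 432 * W ^+ 8 * eps.
  have -> : 2 * al * be * bil S wi wj = k ^+ 2 * qf S w - al ^+ 2 * qf S wi - be ^+ 2 * qf S wj.
    by rewrite rel; ring.
  apply: le_trans (nsub (nsub (nm2 (sq_bnd hk) hq) (nm2 (sq_bnd hal') hqi))
     (nm2 (sq_bnd hbe') hqj)) _.
  by rewrite le_eqVlt; apply/orP; left; apply/eqP; ring.
have hbil : `|bil S wi wj| <= 216 * W ^+ 8 * eps.
  move: e1; rewrite !normrM (ger0_norm (ler0n _ 2)) => e1.
  have := normr_ge0 (bil S wi wj); nra.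
have dN : \det N = - (tri wi wj (cross wi wj)) ^+ 2.
  by rewrite /N !det_mulmx det_tr hdS det_mk3; ring.
have htri : tri wi wj (cross wi wj) =
    cross wi wj 0 0 ^+ 2 + cross wi wj 1 0 ^+ 2 + cross wi wj 2 0 ^+ 2.
  by rewrite /tri !crossE0 !crossE1 !crossE2; ring.
have t1 : 1 <= tri wi wj (cross wi wj).
  by rewrite htri; apply: dot_ge1 => //; apply: intv_cross.
have hs : eps <= 216 * W ^+ 8 * eps by nra.
have := det_small hN (s := 216 * W ^+ 8 * eps) (ltac:(rewrite N00; exact: le_trans hqi hs))
  (ltac:(rewrite N11; exact: le_trans hqj hs)) (ltac:(by rewrite N01))
  (ltac:(by rewrite N10)).
rewrite dN normrN ger0_norm ?sqr_ge0 //.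
have : 1 <= tri wi wj (cross wi wj) ^+ 2 by rewrite expr2; nra.
lra.
Qed.

Definition avec (R : realType) (p : 'cV[R]_3) : 'cV[R]_3 :=
  \col_(i < 3) (if i == 0 :> nat then p 0 0 * p 1 0
                else if i == 1 :> nat then p 0 0 * p 2 0 else p 1 0 * p 2 0).

Lemma avecE0 (R : realType) (p : 'cV[R]_3) : avec p 0 0 = p 0 0 * p 1 0.
Proof. by rewrite mxE. Qed.
Lemma avecE1 (R : realType) (p : 'cV[R]_3) : avec p 1 0 = p 0 0 * p 2 0.
Proof. by rewrite mxE. Qed.
Lemma avecE2 (R : realType) (p : 'cV[R]_3) : avec p 2 0 = p 1 0 * p 2 0.
Proof. by rewrite mxE. Qed.

Definition Nn (R : realType) (c : 'cV[R]_3) : 'M[R]_3 :=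
  \matrix_(i < 3, j < 3) (if i == j then 0 else if (i + j == 1)%N then c 0 0
     else if (i + j == 2)%N then c 1 0 else c 2 0).

Lemma Nn_sym (R : realType) (c : 'cV[R]_3) : (Nn c)^T = Nn c.
Proof. by apply/matrixP => i j; rewrite !mxE eq_sym addnC. Qed.

Lemma Nn_int (R : realType) (c : 'cV[R]_3) : intv c -> intm (Nn c).
Proof.
move=> h i j; rewrite mxE; case: ifP => _ //; case: ifP => _ //; case: ifP => _ //.
Qed.

Lemma Nn_bnd (R : realType) (c : 'cV[R]_3) (s : R) : 0 <= s ->
  (forall i, `|c i 0| <= s) -> forall i j, `|Nn c i j| <= s.
Proof.
move=> s0 h i j; rewrite mxE; case: ifP => _; first by rewrite normr0.
case: ifP => _ //; case: ifP => _ //.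
Qed.

Lemma adj_conj (R : realType) (S : 'M[R]_3) (a b c : 'cV[R]_3) :
  (Adj3 a b c)^T *m ((mk3 a b c)^T *m S *m mk3 a b c) *m Adj3 a b c
  = (tri a b c ^+ 2) *: S.
Proof.
have -> : (Adj3 a b c)^T *m ((mk3 a b c)^T *m S *m mk3 a b c) *m Adj3 a b c
   = (mk3 a b c *m Adj3 a b c)^T *m S *m (mk3 a b c *m Adj3 a b c).
  by rewrite trmx_mul !mulmxA.
by rewrite mk3_adj tr_scalar_mx mul_scalar_mx mul_mx_scalar scalerA expr2.
Qed.

Definition dot (R : realType) (u v : 'cV[R]_3) : R :=
  u 0 0 * v 0 0 + u 1 0 * v 1 0 + u 2 0 * v 2 0.

Lemma e_bnd (R : realType) (a b x : 'cV[R]_3) (Ab G : R) :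
  let c := cross a b in let C2 := dot c c in
  1 <= C2 -> (forall k, `|a k 0| <= Ab) -> (forall k, `|b k 0| <= Ab) ->
  `|dot a x| <= G -> `|dot b x| <= G ->
  forall k, Num.sqrt C2 * `|x k 0 - dot c x / C2 * c k 0| <= 4 * (Ab * G).
Proof.
move=> c C2 hC ha hb hax hbx k.
have C20 : C2 != 0 by apply/eqP => h; rewrite h in hC; lra.
set sig := Num.sqrt C2.
have sig0 : 0 <= sig by apply: sqrtr_ge0.
have sig2 : sig ^+ 2 = C2 by rewrite sqr_sqrtr //; lra.
have sig1 : 1 <= sig by nra.
have hc : forall i, `|c i 0| <= sig.
  move=> i; have : c i 0 ^+ 2 <= C2.
    rewrite /C2 /dot; have := sqr_ge0 (c 0 0); have := sqr_ge0 (c 1 0);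
    have := sqr_ge0 (c 2 0); rewrite -!expr2.
    by case: (ord3_cases i) => -> /=; lra.
  rewrite -sig2 -real_normK ?num_real // => h.
  have := normr_ge0 (c i 0); nra.
set y := cross c x.
have hy : forall i, y i 0 = dot a x * b i 0 - dot b x * a i 0.
  move=> i; rewrite /y /c /dot.
  by case: (ord3_cases i) => ->; rewrite ?crossE0 ?crossE1 ?crossE2 ?crossE0 ?crossE1 ?crossE2; ring.
clearbody c.
have yb : forall i, `|y i 0| <= 2 * (Ab * G).
  move=> i; rewrite hy.
  have -> : 2 * (Ab * G) = G * Ab + G * Ab by ring.
  by apply: nsub; apply: nm2.
have he : C2 * (x k 0 - dot c x / C2 * c k 0) = - cross c y k 0.
  have -> : C2 * (x k 0 - dot c x / C2 * c k 0) = C2 * x k 0 - dot c x * c k 0.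
    by field.
  rewrite /y /C2 /dot.
  by case: (ord3_cases k) => ->; rewrite ?crossE0 ?crossE1 ?crossE2 ?crossE0 ?crossE1 ?crossE2; ring.
clearbody y.
have hcy : `|cross c y k 0| <= 2 * sig * (2 * (Ab * G)).
  have -> : 2 * sig * (2 * (Ab * G)) = sig * (2 * (Ab * G)) + sig * (2 * (Ab * G)) by ring.
  by case: (ord3_cases k) => ->; rewrite ?crossE0 ?crossE1 ?crossE2; apply: nsub;
    apply: nm2; (apply: hc || apply: yb).
have : C2 * `|x k 0 - dot c x / C2 * c k 0| <= 2 * sig * (2 * (Ab * G)).
  have C2p : 0 <= C2 by lra.
  by rewrite -[C2 in C2 * _](ger0_norm C2p) -normrM he normrN.
rewrite -sig2 => h.
have := normr_ge0 (x k 0 - dot c x / C2 * c k 0).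
nra.
Qed.

Definition xvec (R : realType) (N : 'M[R]_3) : 'cV[R]_3 :=
  \col_(i < 3) (if i == 0 :> nat then N 0 1 else if i == 1 :> nat then N 0 2 else N 1 2).

Lemma alpha_bnd (R : realType) (S B : 'M[R]_3) (p w : 'cV[R]_3) (D W eps : R) :
  S^T = S -> B *m p = D *: w -> `|D| <= 6 * W ^+ 3 -> (forall i, `|p i 0| <= 6 * W ^+ 3) ->
  (forall i, `|(B^T *m S *m B) i i| <= eps) -> `|qf S w| <= eps ->
  `|dot (avec p) (xvec (B^T *m S *m B))| <= 72 * W ^+ 6 * eps.
Proof.
move=> hS hBp hD hp hN hw.
have hNs := conj_sym B hS.
have e1 : qf (B^T *m S *m B) p = D ^+ 2 * qf S w by rewrite -qf_mul hBp qfZ.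
have e2 := qf_exp_sym p hNs.
have e3 : 2 * dot (avec p) (xvec (B^T *m S *m B)) = D ^+ 2 * qf S w
   - (p 0 0 ^+ 2 * (B^T *m S *m B) 0 0 + p 1 0 ^+ 2 * (B^T *m S *m B) 1 1
      + p 2 0 ^+ 2 * (B^T *m S *m B) 2 2).
  by rewrite -e1 e2 /dot !mxE /=; ring.
have : `|2 * dot (avec p) (xvec (B^T *m S *m B))| <= 144 * W ^+ 6 * eps.
  rewrite e3.
  apply: le_trans (nsub (nm2 (sq_bnd hD) hw)
     (nsum3 (nm2 (sq_bnd (hp 0)) (hN 0)) (nm2 (sq_bnd (hp 1)) (hN 1))
       (nm2 (sq_bnd (hp 2)) (hN 2)))) _.
  by rewrite le_eqVlt; apply/orP; left; apply/eqP; ring.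
rewrite normrM (ger0_norm (ler0n _ 2)) => h; lra.
Qed.

Lemma c_le_sqrt (R : realType) (c : 'cV[R]_3) i : `|c i 0| <= Num.sqrt (dot c c).
Proof.
have h0 : 0 <= dot c c by rewrite /dot -!expr2; have := sqr_ge0 (c 0 0);
  have := sqr_ge0 (c 1 0); have := sqr_ge0 (c 2 0); lra.
have sig2 : Num.sqrt (dot c c) ^+ 2 = dot c c by rewrite sqr_sqrtr.
have : c i 0 ^+ 2 <= dot c c.
  rewrite /dot; have := sqr_ge0 (c 0 0); have := sqr_ge0 (c 1 0);
  have := sqr_ge0 (c 2 0); rewrite -!expr2.
  by case: (ord3_cases i) => -> /=; lra.
move=> h.
by rewrite -(@ler_pXn2r _ 2) ?nnegrE ?sqrtr_ge0 ?normr_ge0 // sig2 real_normK ?num_real.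
Qed.

Lemma sqrt_le_sum (R : realType) (c : 'cV[R]_3) :
  Num.sqrt (dot c c) <= `|c 0 0| + `|c 1 0| + `|c 2 0|.
Proof.
have h0 : 0 <= dot c c by rewrite /dot -!expr2; have := sqr_ge0 (c 0 0);
  have := sqr_ge0 (c 1 0); have := sqr_ge0 (c 2 0); lra.
have sig2 : Num.sqrt (dot c c) ^+ 2 = dot c c by rewrite sqr_sqrtr.
have e : dot c c = `|c 0 0| ^+ 2 + `|c 1 0| ^+ 2 + `|c 2 0| ^+ 2.
  by rewrite !real_normK ?num_real // /dot !expr2.
rewrite -(@ler_pXn2r _ 2) ?nnegrE ?sqrtr_ge0 ?addr_ge0 ?normr_ge0 // sig2 e.
have := normr_ge0 (c 0 0); have := normr_ge0 (c 1 0); have := normr_ge0 (c 2 0).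
nra.
Qed.

Lemma fin_arith (R : realType) (W eps sig : R) : 1 <= W -> 0 <= eps -> 1 <= sig ->
  sig <= 7776 * W ^+ 12 ->
  sig * (9 * ((2 * W ^+ 2) ^+ 2 * (eps + 4 * (6 * W ^+ 3 * (6 * W ^+ 3) * (72 * W ^+ 6 * eps)) / sig)))
  <= 10 ^+ 6 * W ^+ 16 * eps.
Proof.
move=> hW eps0 sig1 sigb.
set T := 4 * _.
have sig0 : 0 <= sig by lra.
have sig0' : sig != 0 by rewrite gt_eqF // (lt_le_trans ltr01 sig1).
have -> : sig * (9 * ((2 * W ^+ 2) ^+ 2 * (eps + T / sig)))
   = 36 * W ^+ 4 * (sig * eps) + 36 * W ^+ 4 * T by field.
have W4 : 0 <= 36 * W ^+ 4 by rewrite mulr_ge0 // exprn_ge0 //; lra.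
have h2 : 36 * W ^+ 4 * (sig * eps) <= 36 * W ^+ 4 * (7776 * W ^+ 12 * eps).
  by apply: ler_wpM2l => //; apply: ler_wpM2r.
apply: le_trans (lerD h2 (lexx _)) _.
rewrite /T.
have : 0 <= W ^+ 16 * eps by apply: mulr_ge0 => //; apply: exprn_ge0; lra.
have -> : 36 * W ^+ 4 * (7776 * W ^+ 12 * eps) +
  36 * W ^+ 4 * (4 * (6 * W ^+ 3 * (6 * W ^+ 3) * (72 * W ^+ 6 * eps)))
  = (36 * 7776 + 36 * 4 * 6 * 6 * 72) * (W ^+ 16 * eps) by ring.
have -> : 10 ^+ 6 * W ^+ 16 * eps = 10 ^+ 6 * (W ^+ 16 * eps) by ring.
nra.
Qed.

Lemma FL (R : realType) (S : 'M[R]_3) (w1 w2 w3 w4 w5 : 'cV[R]_3) (W eps : R) :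
  S^T = S -> intv w1 -> intv w2 -> intv w3 -> intv w4 -> intv w5 -> 1 <= W ->
  (forall i, `|w1 i 0| <= W) -> (forall i, `|w2 i 0| <= W) -> (forall i, `|w3 i 0| <= W) ->
  (forall i, `|w4 i 0| <= W) -> (forall i, `|w5 i 0| <= W) ->
  `|qf S w1| <= eps -> `|qf S w2| <= eps -> `|qf S w3| <= eps ->
  `|qf S w4| <= eps -> `|qf S w5| <= eps ->
  tri w1 w2 w3 != 0 ->
  cross (avec (Adj3 w1 w2 w3 *m w4)) (avec (Adj3 w1 w2 w3 *m w5)) != 0 ->
  exists S' : 'M[R]_3, exists mu : R, exists sig : R,
    S'^T = S' /\ intm S' /\ 1 <= sig /\ sig <= 7776 * W ^+ 12 /\
     (forall i j, `|S' i j| <= 36 * W ^+ 4 * sig) /\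
     (forall i j, sig * `|(S - mu *: S') i j| <= 10 ^+ 6 * W ^+ 16 * eps).
Proof.
move=> hS i1 i2 i3 i4 i5 hW b1 b2 b3 b4 b5 q1 q2 q3 q4 q5 hD hc.
have eps0 : 0 <= eps by apply: le_trans q1.
pose D := tri w1 w2 w3. pose B := mk3 w1 w2 w3. pose A := Adj3 w1 w2 w3.
pose N := B^T *m S *m B.
have hD1 : 1 <= D ^+ 2 by apply: sqr_intr_ge1 => //; apply: int_tri.
have hDb : `|D| <= 6 * W ^+ 3 by apply: bnd_tri.
have Aint : intm A by apply: intm_Adj3.
have Ab : forall i j, `|A i j| <= 2 * W ^+ 2.
  move=> i j; rewrite /A mxE; case: ifP => _; [|case: ifP => _]; exact: bnd_cross.
have hBA : B *m A = D%:M by apply: mk3_adj.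
have vint : forall (w : 'cV[R]_3), intv w -> intv (A *m w).
  move=> w hw i; apply: intm_mul => // k l; rewrite (ord1 l); exact: hw.
have vbnd : forall (w : 'cV[R]_3), (forall i, `|w i 0| <= W) ->
    forall i, `|(A *m w) i 0| <= 6 * W ^+ 3.
  move=> w hw i; apply: le_trans (bnd_mulmx Ab (b := W) _ i 0) _.
    by move=> k l; rewrite (ord1 l).
  by rewrite le_eqVlt; apply/orP; left; apply/eqP; ring.
have vB : forall w : 'cV[R]_3, B *m (A *m w) = D *: w by move=> w; rewrite mulmxA hBA mul_scalar_mx.
have hNd : forall i, `|N i i| <= eps.
  move=> i; rewrite /N conjE.
  by case: (ord3_cases i) => ->; rewrite ?col_mk3_0 ?col_mk3_1 ?col_mk3_2.
have ha := alpha_bnd hS (vB w4) hDb (vbnd w4 b4) hNd q4.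
have hb := alpha_bnd hS (vB w5) hDb (vbnd w5 b5) hNd q5.
have avb : forall w : 'cV[R]_3, (forall i, `|w i 0| <= W) ->
    forall k, `|avec (A *m w) k 0| <= 6 * W ^+ 3 * (6 * W ^+ 3).
  move=> w hw k; have := vbnd w hw.
  by case: (ord3_cases k) => -> hv; rewrite ?avecE0 ?avecE1 ?avecE2; apply: nm2.
have avi : forall w : 'cV[R]_3, intv w -> intv (avec (A *m w)).
  move=> w hw k; have := vint w hw.
  by case: (ord3_cases k) => -> hv; rewrite ?avecE0 ?avecE1 ?avecE2; apply: rpredM.
fold A in hc.
set a := avec (A *m w4) in ha hc avb.
set b := avec (A *m w5) in hb hc.
set x := xvec N in ha hb.
set c := cross a b in hc.
have cint : intv c by apply: intv_cross; [apply: avi|apply: avi].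
have hC2 : 1 <= dot c c by rewrite /dot -!expr2; apply: dot_ge1.
have he := e_bnd hC2 (avb w4 b4) (avb w5 b5) ha hb.
set sig := Num.sqrt (dot c c) in he.
have sig0 : 0 <= sig by apply: sqrtr_ge0.
have sig2 : sig ^+ 2 = dot c c by rewrite sqr_sqrtr //; lra.
have sig1 : 1 <= sig by nra.
have hcb : forall i, `|c i 0| <= sig by move=> i; apply: c_le_sqrt.
have ab : forall k, `|a k 0| <= 36 * W ^+ 6.
  move=> k; apply: le_trans (avb w4 b4 k) _.
  by rewrite le_eqVlt; apply/orP; left; apply/eqP; ring.
have bb : forall k, `|b k 0| <= 36 * W ^+ 6.
  move=> k; apply: le_trans (avb w5 b5 k) _.
  by rewrite le_eqVlt; apply/orP; left; apply/eqP; ring.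
have cb : forall k, `|c k 0| <= 2592 * W ^+ 12.
  have e : 2592 * W ^+ 12 = 36 * W ^+ 6 * (36 * W ^+ 6) + 36 * W ^+ 6 * (36 * W ^+ 6).
    by ring.
  move=> k; rewrite e /c.
  by case: (ord3_cases k) => ->; rewrite ?crossE0 ?crossE1 ?crossE2; apply: nsub; apply: nm2.
have sigb : sig <= 7776 * W ^+ 12.
  apply: le_trans (sqrt_le_sum c) _.
  have := cb 0; have := cb 1; have := cb 2; lra.
have hNs : N^T = N by apply: conj_sym.
set lam := dot c x / dot c c in he.
pose EN := N - lam *: Nn c.
set S' := A^T *m Nn c *m A.
have key : A^T *m EN *m A = D ^+ 2 *: S - lam *: S'.
  by rewrite /EN mulmxBr mulmxBl /N adj_conj -scalemxAr -scalemxAl.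
have keyE : forall i j, (A^T *m EN *m A) i j = D ^+ 2 * S i j - lam * S' i j.
  by move=> i j; rewrite key !mxE.
have ENE : forall i j, EN i j = N i j - lam * Nn c i j by move=> i j; rewrite /EN !mxE.
have xE0 : x 0 0 = N 0 1 by rewrite /x mxE.
have xE1 : x 1 0 = N 0 2 by rewrite /x mxE.
have xE2 : x 2 0 = N 1 2 by rewrite /x mxE.
have S'sym : S'^T = S' by rewrite /S' conj_sym // Nn_sym.
have S'int : intm S'.
  apply: intm_mul; last exact: Aint.
  apply: intm_mul; last by apply: Nn_int.
  by move=> i j; rewrite mxE.
have S'b : forall i j, `|S' i j| <= 9 * ((2 * W ^+ 2) ^+ 2 * sig).
  by apply: bnd_conj => //; apply: Nn_bnd.
clearbody EN S' N.
set T := 4 * (6 * W ^+ 3 * (6 * W ^+ 3) * (72 * W ^+ 6 * eps)) in he.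
have W0 : 0 <= W by lra.
have T0 : 0 <= T by rewrite /T !mulr_ge0 // ?exprn_ge0.
have hek : forall k, `|x k 0 - lam * c k 0| <= T / sig.
  move=> k; rewrite ler_pdivlMr; last by lra.
  by rewrite mulrC; exact: he.
have Ts : 0 <= T / sig by apply: divr_ge0.
have f01 : `|N 0 1 - lam * c 0 0| <= T / sig by rewrite -xE0; apply: hek.
have f02 : `|N 0 2 - lam * c 1 0| <= T / sig by rewrite -xE1; apply: hek.
have f12 : `|N 1 2 - lam * c 2 0| <= T / sig by rewrite -xE2; apply: hek.
have f10 : `|N 1 0 - lam * c 0 0| <= T / sig by rewrite (symE 0 1 hNs).
have f20 : `|N 2 0 - lam * c 1 0| <= T / sig by rewrite (symE 0 2 hNs).
have f21 : `|N 2 1 - lam * c 2 0| <= T / sig by rewrite (symE 1 2 hNs).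
have d0 := hNd 0; have d1 := hNd 1; have d2 := hNd 2.
have ENb : forall i j, `|EN i j| <= eps + T / sig.
  move=> i j; rewrite ENE.
  case: (ord3_cases i) => ->; case: (ord3_cases j) => ->; rewrite /Nn mxE /=;
    rewrite ?mulr0 ?subr0.
  all: try (apply: le_trans (hNd _) _; rewrite lerDl //).
  all: try (apply: le_trans f01 _; rewrite lerDr //).
  all: try (apply: le_trans f02 _; rewrite lerDr //).
  all: try (apply: le_trans f12 _; rewrite lerDr //).
  all: try (apply: le_trans f10 _; rewrite lerDr //).
  all: try (apply: le_trans f20 _; rewrite lerDr //).
  all: try (apply: le_trans f21 _; rewrite lerDr //).
have hE := bnd_conj Ab ENb.
exists S', (lam / D ^+ 2), sig.
split; first exact: S'sym. split; first exact: S'int. split; first exact: sig1.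
split; first exact: sigb.
split.
  move=> i j; apply: le_trans (S'b i j) _.
  by rewrite le_eqVlt; apply/orP; left; apply/eqP; ring.
move=> i j.
have hD1' : 1 <= D ^+ 2 by apply: sqr_intr_ge1 => //; apply: int_tri.
have D0 : D ^+ 2 != 0 by rewrite gt_eqF // (lt_le_trans ltr01 hD1').
clear key hc S'sym hBA vB.
have e : (S - lam / D ^+ 2 *: S') i j = (A^T *m EN *m A) i j / D ^+ 2.
  by rewrite keyE !mxE; field.
rewrite e normrM normfV (ger0_norm (sqr_ge0 D)).
set X := `|(A^T *m EN *m A) i j|.
have X0 : 0 <= X by apply: normr_ge0.
have h1 : X / D ^+ 2 <= X.
  by rewrite ler_pdivrMr ?(lt_le_trans ltr01 hD1') // ler_peMr.
apply: le_trans (ler_wpM2l sig0 h1) _.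
apply: le_trans (ler_wpM2l sig0 (hE i j)) _.
exact: fin_arith.
Qed.

Lemma cbrt_cube (R : realType) (x : R) : cbrt x ^+ 3 = x.
Proof.
have key : forall y : R, 0 <= y -> powR y (3^-1) ^+ 3 = y.
  move=> y hy; rewrite -powR_mulrn ?powR_ge0 // -powRrM mulVf ?powRr1 //.
rewrite /cbrt; case: ifP => h; first exact: key.
rewrite exprNn key; last by rewrite oppr_ge0; apply/ltW; rewrite ltNge h.
by ring.
Qed.

Lemma trip (R : realType) (x1 x2 x3 y1 y2 y3 m d : R) :
  `|x1| <= m -> `|x2| <= m -> `|x3| <= m -> `|y1| <= m -> `|y2| <= m -> `|y3| <= m ->
  `|x1 - y1| <= d -> `|x2 - y2| <= d -> `|x3 - y3| <= d ->
  `|x1 * x2 * x3 - y1 * y2 * y3| <= 3 * (m ^+ 2 * d).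
Proof.
move=> h1 h2 h3 k1 k2 k3 d1 d2 d3.
have -> : x1 * x2 * x3 - y1 * y2 * y3
   = (x1 - y1) * x2 * x3 + y1 * (x2 - y2) * x3 + y1 * y2 * (x3 - y3) by ring.
apply: le_trans (nsum3 (n3p d1 h2 h3) (n3p k1 d2 h3) (n3p k1 k2 d3)) _.
by rewrite le_eqVlt; apply/orP; left; apply/eqP; ring.
Qed.

Lemma det_pert (R : realType) (X Y : 'M[R]_3) (m d : R) :
  (forall i j, `|X i j| <= m) -> (forall i j, `|Y i j| <= m) ->
  (forall i j, `|X i j - Y i j| <= d) -> `|\det X - \det Y| <= 18 * (m ^+ 2 * d).
Proof.
move=> hX hY hd; rewrite !det3'.
pose t := fun a b c e f g => trip (hX a b) (hX c e) (hX f g) (hY a b) (hY c e) (hY f g)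
  (hd a b) (hd c e) (hd f g).
have := n6 (t 0 0 1 1 2 2) (t 0 0 1 2 2 1) (t 0 1 1 0 2 2) (t 0 1 1 2 2 0)
   (t 0 2 1 0 2 1) (t 0 2 1 1 2 0).
move=> h; apply: le_trans _ (le_trans h _).
  by rewrite le_eqVlt; apply/orP; left; apply/eqP; congr (`| _ |); ring.
by rewrite le_eqVlt; apply/orP; left; apply/eqP; ring.
Qed.

Lemma qnorm_pos (R : realType) (X : 'M[R]_3) : X^T = X -> X != 0 -> 0 < qnorm X.
Proof.
move=> hX hn; rewrite lt_neqAle; apply/andP; split; last first.
  by apply: le_trans (qnorm_ge X (i := 0) (j := 0) isT); apply: normr_ge0.
apply/eqP => h0; move/eqP: hn; apply; apply/matrixP => i j; rewrite mxE.
have z : forall i j : 'I_3, (i <= j)%N -> qcoef X i j = 0.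
  move=> a b hab; apply/normr0_eq0; apply/le_anti; rewrite normr_ge0 andbT.
  by rewrite h0 qnorm_ge.
have zz : forall i j : 'I_3, (i <= j)%N -> X i j = 0.
  move=> a b hab; have := z a b hab; rewrite /qcoef; case: eqP => [->//|_].
  by rewrite (symE a b hX) => /eqP; rewrite -mulr2n mulrn_eq0 /= => /eqP.
case: (leqP i j) => hij; first exact: zz.
by rewrite (symE j i hX); apply: zz; apply: ltnW.
Qed.

Lemma int_form (R : realType) (X : 'M[R]_3) : X^T = X -> intm X -> integral_form X.
Proof.
move=> hX hi; split => // i j _; apply/intrP; rewrite /qcoef.
by case: eqP => _; rewrite ?rpredD.
Qed.

Lemma ar1 (R : realType) (sm d0 del : R) : del <= d0 -> 4 * d0 <= (sm + 1) ^+ 2 * d0 ->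
  36 * (sm + 1) ^+ 2 * d0 <= 1 -> del <= 1.
Proof. move=> h1 h2 h3; lra. Qed.

Lemma ar2 (R : realType) (sm d0 del : R) : del <= d0 -> 0 <= del -> 1 <= sm -> del <= 1 ->
  36 * (sm + 1) ^+ 2 * d0 <= 1 -> 18 * ((sm + del) ^+ 2 * del) <= 1 / 2.
Proof.
move=> h1 h2 h3 h4 h5.
have a : (sm + del) ^+ 2 <= (sm + 1) ^+ 2 by rewrite !expr2; apply: ler_pM; lra.
have b : (sm + del) ^+ 2 * del <= (sm + 1) ^+ 2 * d0.
  by apply: ler_pM => //; apply: sqr_ge0.
lra.
Qed.

Lemma cube_near (R : realType) (s h : R) : `|s ^+ 3 - 1| <= h -> h <= 1 / 2 ->
  1 / 2 <= s /\ `|s - 1| <= h.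
Proof.
move=> h1 h2.
have s3 : 1 / 2 <= s ^+ 3.
  have := ler_norm (1 - s ^+ 3); rewrite distrC; lra.
have sp : 0 < s.
  rewrite ltNge; apply/negP => hs.
  have : s ^+ 3 <= 0 by rewrite exprS; apply: mulr_le0_ge0 => //; apply: sqr_ge0.
  lra.
have sh : 1 / 2 <= s.
  rewrite leNgt; apply/negP => hs.
  have : s ^+ 3 < 1 / 8.
    have -> : (1 / 8 : R) = 1 / 2 * (1 / 2) * (1 / 2) by field.
    rewrite exprS expr2 mulrA; apply: ltr_pM; rewrite ?mulr_ge0 //; try lra.
    by apply: ltr_pM => //; lra.
  lra.
split => //.
have e : s ^+ 3 - 1 = (s - 1) * (s ^+ 2 + s + 1) by ring.
have q0 : 0 <= s ^+ 2 + s + 1 by have := sqr_ge0 s; lra.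
move: h1; rewrite e normrM (ger0_norm q0) => hh.
apply: le_trans hh; apply: ler_peMr; first exact: normr_ge0.
by have := sqr_ge0 s; lra.
Qed.

Lemma ar4 (R : realType) (sm del : R) : 0 <= del -> del <= 1 -> 1 <= sm ->
  del + 2 * (18 * ((sm + del) ^+ 2 * del)) * (sm + del) <= del * (1 + 36 * (sm + 1) ^+ 3).
Proof.
move=> h1 h2 h3.
have a : (sm + del) ^+ 3 <= (sm + 1) ^+ 3.
  by apply: lerXn2r; rewrite ?nnegrE; lra.
have -> : del + 2 * (18 * ((sm + del) ^+ 2 * del)) * (sm + del)
  = del + 36 * ((sm + del) ^+ 3 * del) by ring.
have -> : del * (1 + 36 * (sm + 1) ^+ 3) = del + 36 * ((sm + 1) ^+ 3 * del) by ring.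
have : (sm + del) ^+ 3 * del <= (sm + 1) ^+ 3 * del by apply: ler_wpM2r.
lra.
Qed.

Lemma Zbound (R : realType) (W sig : R) : 1 <= W -> 0 <= sig -> sig <= 7776 * W ^+ 12 ->
  2 * (36 * W ^+ 4 * sig) <= 10 ^+ 6 * W ^+ 16.
Proof.
move=> hW s0 sb.
have W4 : 0 <= W ^+ 4 by apply: exprn_ge0; lra.
have -> : W ^+ 16 = W ^+ 4 * W ^+ 12 by rewrite -exprD.
have b : W ^+ 4 * sig <= W ^+ 4 * (7776 * W ^+ 12) by apply: ler_wpM2l.
have a : 0 <= W ^+ 4 * W ^+ 12 by rewrite mulr_ge0 // exprn_ge0 //; lra.
have -> : 2 * (36 * W ^+ 4 * sig) = 72 * (W ^+ 4 * sig) by ring.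
move: a b; have -> : W ^+ 4 * (7776 * W ^+ 12) = 7776 * (W ^+ 4 * W ^+ 12) by ring.
set u := W ^+ 4 * sig; set v := W ^+ 4 * W ^+ 12 => a b; lra.
Qed.

Lemma sq4 (R : realType) (sm : R) : 1 <= sm -> 4 <= (sm + 1) ^+ 2.
Proof. by move=> h; rewrite expr2; nra. Qed.

Lemma half_contra (R : realType) : (1 : R) <= 1 / 2 -> False.
Proof. by move=> h; lra. Qed.

Lemma inv2 (R : realType) (s : R) : 1 / 2 <= s -> s^-1 <= 2.
Proof.
move=> h; have sp : 0 < s by apply: lt_le_trans h; rewrite divr_gt0.
by rewrite -(mul1r s^-1) ler_pdivrMr //; lra.
Qed.

Lemma DIO (R : realType) (M : R) (S S' : 'M[R]_3) (mu sig W eps sm c0 : R) :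
  1 < M -> S^T = S -> \det S = -1 -> 1 <= sm -> (forall i j, `|S i j| <= sm) ->
  (forall S' : 'M[R]_3, integral_form S' -> S' != 0 -> qdet S' != 0 ->
      qnorm (S - (cbrt (qdet S'))^-1 *: S') > c0 * powR (qnorm S') (- M)) ->
  1 <= W -> 0 <= eps ->
  S'^T = S' -> intm S' -> 1 <= sig -> sig <= 7776 * W ^+ 12 ->
  (forall i j, `|S' i j| <= 36 * W ^+ 4 * sig) ->
  (forall i j, sig * `|(S - mu *: S') i j| <= 10 ^+ 6 * W ^+ 16 * eps) ->
  36 * (sm + 1) ^+ 2 * (10 ^+ 6 * W ^+ 16 * eps) <= 1 ->
  2 * (1 + 36 * (sm + 1) ^+ 3) * (72 * (10 ^+ 6 * W ^+ 20 * eps)) *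
     powR (10 ^+ 6 * W ^+ 16) (M - 1) <= c0 ->
  False.
Proof.
move=> hM hS hdS hsm hSb hD hW eps0 hS's hS'i sig1 sigb hS'b hE hsmall hfin.
have W0 : 0 <= W := le_trans ler01 hW.
set d0 := 10 ^+ 6 * W ^+ 16 * eps.
have d00 : 0 <= d0 by rewrite /d0 !mulr_ge0 // exprn_ge0.
have sig0 : 0 < sig := lt_le_trans ltr01 sig1.
set del := d0 / sig.
have del0 : 0 <= del by apply: divr_ge0 => //; apply: ltW.
have deld0 : del <= d0 by rewrite /del ler_pdivrMr // ler_peMr.
have Eb : forall i j, `|(S - mu *: S') i j| <= del.
  by move=> i j; rewrite /del ler_pdivlMr // mulrC.
have hsm1 : 4 <= (sm + 1) ^+ 2 by apply: sq4.
have : 4 * d0 <= (sm + 1) ^+ 2 * d0 by apply: ler_wpM2r.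
move=> h4; have del1 : del <= 1 by apply: (ar1 deld0 h4 hsmall).
have muSb : forall i j, `|(mu *: S') i j| <= sm + del.
  move=> i j; have -> : (mu *: S') i j = S i j - (S - mu *: S') i j by rewrite !mxE; ring.
  by apply: nsub.
have hSb' : forall i j, `|S i j| <= sm + del.
  by move=> i j; apply: le_trans (hSb i j) _; rewrite lerDl.
have hdiff : forall i j, `|(mu *: S') i j - S i j| <= del.
  move=> i j; have -> : (mu *: S') i j - S i j = - (S - mu *: S') i j by rewrite !mxE; ring.
  by rewrite normrN.
have hpert := det_pert muSb hSb' hdiff.
set y := - \det (mu *: S').
have hy : `|y - 1| <= 18 * ((sm + del) ^+ 2 * del).
  have -> : y - 1 = - (\det (mu *: S') - \det S) by rewrite /y hdS; ring.
  by rewrite normrN.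
have hy2 := ar2 deld0 del0 hsm del1 hsmall.
have ydet : y = mu ^+ 3 * qdet S' by rewrite /y detZ /qdet; ring.
have q0 : qdet S' != 0.
  apply/eqP => h; move: hy hy2; rewrite ydet h mulr0 sub0r normrN normr1.
  by move=> a b; have := le_trans a b; apply: half_contra.
set t := cbrt (qdet S').
have t3 : t ^+ 3 = qdet S' by apply: cbrt_cube.
set s := mu * t.
have s3 : s ^+ 3 = y by rewrite /s exprMn t3 ydet.
have [sh hs1] : 1 / 2 <= s /\ `|s - 1| <= 18 * ((sm + del) ^+ 2 * del).
  by apply: cube_near => //; rewrite s3.
have t0 : t != 0 by apply: contra q0 => /eqP h; rewrite -t3 h expr0n.
have s0 : s != 0 by rewrite gt_eqF // (lt_le_trans _ sh).
have mu0 : mu != 0 by apply: contra s0 => /eqP h; rewrite /s h mul0r.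
have entry : forall i j, (S - t^-1 *: S') i j
    = (S - mu *: S') i j + (s - 1) / s * ((mu *: S') i j).
  by move=> i j; rewrite !mxE /s; field; rewrite t0 mu0.
set K := 1 + 36 * (sm + 1) ^+ 3.
have hK := ar4 del0 del1 hsm.
have sp : 0 < s by apply: lt_le_trans sh; rewrite divr_gt0.
have sinv : `|s|^-1 <= 2.
  by rewrite ger0_norm ?(ltW sp) //; apply: inv2.
have entb : forall i j, `|(S - t^-1 *: S') i j| <= del * K.
  move=> i j; rewrite entry.
  apply: le_trans (ler_normD _ _) _; apply: le_trans _ hK.
  apply: lerD; first exact: Eb.
  rewrite normrM; apply: ler_pM; [exact: normr_ge0|exact: normr_ge0| |exact: muSb].
  rewrite normrM normfV mulrC; apply: ler_pM => //; rewrite ?invr_ge0 ?normr_ge0 //.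
have K0 : 0 <= K by rewrite /K addr_ge0 // mulr_ge0 // exprn_ge0 // addr_ge0 //; apply: le_trans ler01 hsm.
have qn : qnorm (S - t^-1 *: S') <= 2 * (del * K).
  by apply: qnorm_le => //; apply: mulr_ge0.
have S'0 : S' != 0.
  by apply/eqP => h; move/eqP: q0; apply; rewrite h /qdet det0 oppr0.
have hDi := hD S' (int_form hS's hS'i) S'0 q0.
have qpos := qnorm_pos hS's S'0.
set Z := 2 * (36 * W ^+ 4 * sig).
have qZ : qnorm S' <= Z by apply: qnorm_le => //; rewrite !mulr_ge0 ?exprn_ge0 // ltW.
have Z0 : 0 < Z by apply: lt_le_trans qZ.
have M0 : 0 <= M := ltW (lt_trans ltr01 hM).
have pw1 : powR (qnorm S') M <= powR Z M.
  by apply: ge0_ler_powR => //; rewrite nnegrE ltW.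
have pw2 : (powR Z M)^-1 <= (powR (qnorm S') M)^-1.
  by rewrite lef_pV2 ?posrE ?powR_gt0.
have c00 : 0 <= c0.
  apply: le_trans hfin; rewrite !mulr_ge0 ?powR_ge0 ?exprn_ge0 ?addr_ge0 //; exact: mulr_ge0 (exprn_ge0 _ (addr_ge0 (le_trans ler01 hsm) ler01)).
have h1 : c0 / powR Z M < 2 * (del * K).
  apply: le_lt_trans (ler_wpM2l c00 pw2) _.
  by rewrite -powRN; apply: lt_le_trans hDi qn.
move: h1; rewrite ltr_pdivrMr ?powR_gt0 // -(mulr_powRB1 (ltW Z0) (lt_trans ltr01 hM)) => h1.
have pZ : powR Z (M - 1) <= powR (10 ^+ 6 * W ^+ 16) (M - 1).
  apply: ge0_ler_powR; rewrite ?nnegrE ?subr_ge0 ?(ltW Z0) ?(ltW hM) //.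
    by rewrite mulr_ge0 // exprn_ge0 // (le_trans ler01 hW).
  by apply: Zbound => //; apply: ltW.
have dZ : del * Z = 72 * (10 ^+ 6 * W ^+ 20 * eps).
  by rewrite /del /Z /d0; field; rewrite gt_eqF.
have : 2 * (del * K) * (Z * powR Z (M - 1)) <= c0.
  apply: le_trans hfin.
  have -> : 2 * (del * K) * (Z * powR Z (M - 1)) = 2 * K * (del * Z) * powR Z (M - 1) by ring.
  rewrite dZ; apply: ler_wpM2l => //.
  by rewrite !mulr_ge0 ?exprn_ge0.
move=> h2; have := lt_le_trans h1 h2; rewrite ltxx.
by [].
Qed.

Definition np (R : realType) (x y : 'cV[R]_3) := ~ exists t : R, x = t *: y.

Lemma divE (R : realType) (x y z w : R) : z != 0 -> x * z = y * w -> x = y / z * w.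
Proof. by move=> hz h; rewrite mulrAC -h mulfK. Qed.

Lemma cross0 (R : realType) (a b : 'cV[R]_3) : cross a b = 0 -> b != 0 -> exists t, a = t *: b.
Proof.
move=> h hb.
have c0 : cross a b 0 0 = 0 by rewrite h mxE.
have c1 : cross a b 1 0 = 0 by rewrite h mxE.
have c2 : cross a b 2 0 = 0 by rewrite h mxE.
move: c0 c1 c2; rewrite crossE0 crossE1 crossE2 => c0 c1 c2.
have [b0|b0] := eqVneq (b 0 0) 0; last first.
  exists (a 0 0 / b 0 0); apply: cV3P; rewrite !mxE; apply: divE => //; lra.
have [b1|b1] := eqVneq (b 1 0) 0; last first.
  exists (a 1 0 / b 1 0); apply: cV3P; rewrite !mxE; apply: divE => //; lra.
have [b2|b2] := eqVneq (b 2 0) 0; last first.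
  exists (a 2 0 / b 2 0); apply: cV3P; rewrite !mxE; apply: divE => //; lra.
by move/eqP: hb; case; apply: cV3P; rewrite ?mxE.
Qed.

Lemma mk3_mul (R : realType) (a b c p : 'cV[R]_3) :
  mk3 a b c *m p = p 0 0 *: a + p 1 0 *: b + p 2 0 *: c.
Proof. by apply: cV3P; rewrite !mxE sum3 !mxE /=; ring. Qed.

Lemma cross_comp0 (R : realType) (a b : 'cV[R]_3) : cross a b = 0 ->
  [/\ cross a b 0 0 = 0, cross a b 1 0 = 0 & cross a b 2 0 = 0].
Proof. by move=> h; rewrite h !mxE. Qed.

Lemma tri_c23 (R : realType) (a b c : 'cV[R]_3) : cross b c = 0 -> tri a b c = 0.
Proof.
move/cross_comp0; rewrite crossE0 crossE1 crossE2 => -[h0 h1 h2].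
have -> : tri a b c = a 0 0 * (b 1 0 * c 2 0 - b 2 0 * c 1 0)
  + a 1 0 * (b 2 0 * c 0 0 - b 0 0 * c 2 0) + a 2 0 * (b 0 0 * c 1 0 - b 1 0 * c 0 0) by [].
by rewrite h0 h1 h2; ring.
Qed.

Lemma tri_c13 (R : realType) (a b c : 'cV[R]_3) : cross a c = 0 -> tri a b c = 0.
Proof.
move/cross_comp0; rewrite crossE0 crossE1 crossE2 => -[h0 h1 h2].
have -> : tri a b c = - (b 0 0 * (a 1 0 * c 2 0 - a 2 0 * c 1 0)
  + b 1 0 * (a 2 0 * c 0 0 - a 0 0 * c 2 0) + b 2 0 * (a 0 0 * c 1 0 - a 1 0 * c 0 0))
  by rewrite /tri; ring.
by rewrite h0 h1 h2; ring.
Qed.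

Lemma tri_c12 (R : realType) (a b c : 'cV[R]_3) : cross a b = 0 -> tri a b c = 0.
Proof.
move/cross_comp0; rewrite crossE0 crossE1 crossE2 => -[h0 h1 h2].
have -> : tri a b c = c 0 0 * (a 1 0 * b 2 0 - a 2 0 * b 1 0)
  + c 1 0 * (a 2 0 * b 0 0 - a 0 0 * b 2 0) + c 2 0 * (a 0 0 * b 1 0 - a 1 0 * b 0 0)
  by rewrite /tri; ring.
by rewrite h0 h1 h2; ring.
Qed.

Lemma case1_id (R : realType) (w1 w2 w3 : 'cV[R]_3) :
  dot (cross w1 w2) (cross w1 w2) *: w3 =
  dot (cross w3 w2) (cross w1 w2) *: w1 + dot (cross w1 w3) (cross w1 w2) *: w2
  + tri w1 w2 w3 *: cross w1 w2.
Proof.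
apply: cV3P; rewrite /dot /tri !mxE /=; ring.
Qed.

Lemma prop_of (R : realType) (k a : R) (w x : 'cV[R]_3) :
  k != 0 -> k *: w = a *: x -> exists t, w = t *: x.
Proof.
move=> hk h; exists (k^-1 * a).
by rewrite -scalerA -h scalerA mulVf // scale1r.
Qed.

Lemma cprop (R : realType) (p q : 'cV[R]_3) :
  p 0 0 != 0 -> p 1 0 != 0 -> p 2 0 != 0 -> q 0 0 != 0 -> q 2 0 != 0 ->
  cross (avec p) (avec q) = 0 -> exists t, q = t *: p.
Proof.
move=> p0 p1 p2 q0 q2 /cross_comp0; rewrite crossE0 crossE2 !avecE0 !avecE1 !avecE2.
move=> -[h0 _ h2].
have e1 : p 0 0 * q 1 0 = p 1 0 * q 0 0.
  have : p 2 0 * q 2 0 * (p 0 0 * q 1 0 - p 1 0 * q 0 0) = 0 by rewrite -h0; ring.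
  by move/eqP; rewrite mulf_eq0 mulf_eq0 (negbTE p2) (negbTE q2) /= subr_eq0 => /eqP.
have e2 : p 1 0 * q 2 0 = p 2 0 * q 1 0.
  have : p 0 0 * q 0 0 * (p 1 0 * q 2 0 - p 2 0 * q 1 0) = 0 by rewrite -h2; ring.
  by move/eqP; rewrite mulf_eq0 mulf_eq0 (negbTE p0) (negbTE q0) /= subr_eq0 => /eqP.
exists (q 0 0 / p 0 0); apply: cV3P; rewrite !mxE.
- by rewrite divfK.
- by apply: divE => //; rewrite mulrC e1 mulrC.
- apply: divE => //.
  apply: (mulIf p1).
  transitivity (p 0 0 * (p 1 0 * q 2 0)); first by ring.
  rewrite e2; transitivity (p 2 0 * (p 0 0 * q 1 0)); first by ring.
  by rewrite e1; ring.
Qed.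

Lemma PLcase (R : realType) (S : 'M[R]_3) (x y w : 'cV[R]_3) (k a1 a2 W sm eps : R) :
  S^T = S -> \det S = -1 -> (forall i j, `|S i j| <= sm) ->
  intv x -> intv y -> 1 <= W ->
  (forall i, `|x i 0| <= W) -> (forall i, `|y i 0| <= W) ->
  a1 \is a Num.int -> a2 \is a Num.int -> k != 0 ->
  `|k| <= 12 * W ^+ 4 -> `|a1| <= 12 * W ^+ 4 -> `|a2| <= 12 * W ^+ 4 ->
  k *: w = a1 *: x + a2 *: y -> np w x -> np w y ->
  cross x y != 0 ->
  `|qf S x| <= eps -> `|qf S y| <= eps -> `|qf S w| <= eps ->
  216 * W ^+ 8 * eps <= 36 * W ^+ 4 * sm ->
  6 * ((216 * W ^+ 8 * eps) * (36 * W ^+ 4 * sm) ^+ 2) < 1 -> False.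
Proof.
move=> hS hdS hSm hx hy hW bx bY ha1 ha2 hk k1 k2 k3 hrel n1 n2 hc q1 q2 q3 s1 s2.
have a10 : a1 != 0.
  apply/eqP => h; apply: n2; apply: (prop_of (a := a2) hk).
  by rewrite hrel h scale0r add0r.
have a20 : a2 != 0.
  apply/eqP => h; apply: n1; apply: (prop_of (a := a1) hk).
  by rewrite hrel h scale0r addr0.
exact: (PL hS hdS hSm hx hy hW bx bY ha1 ha2 a10 a20 k1 k2 k3 hrel hc q1 q2 q3 s1 s2).
Qed.

Lemma dot_bnd (R : realType) (a b : 'cV[R]_3) (m : R) :
  (forall i, `|a i 0| <= m) -> (forall i, `|b i 0| <= m) -> `|dot a b| <= 3 * (m * m).
Proof.
move=> ha hb; apply: le_trans (nsum3 (nm2 (ha 0) (hb 0)) (nm2 (ha 1) (hb 1)) (nm2 (ha 2) (hb 2))) _.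
by rewrite le_eqVlt; apply/orP; left; apply/eqP; ring.
Qed.

Lemma dot_int (R : realType) (a b : 'cV[R]_3) : intv a -> intv b -> dot a b \is a Num.int.
Proof.
move=> ha hb; rewrite /dot.
by apply: rpredD; [apply: rpredD|]; apply: rpredM; (apply: ha || apply: hb).
Qed.

Lemma W34 (R : realType) (W : R) : 1 <= W -> 6 * W ^+ 3 <= 12 * W ^+ 4.
Proof.
move=> h; have W3 : 0 <= W ^+ 3 by apply: exprn_ge0; lra.
have : W ^+ 3 <= W ^+ 3 * W by apply: ler_peMr.
rewrite -exprSr; lra.
Qed.

Lemma W44 (R : realType) (W : R) : 3 * (2 * W ^+ 2 * (2 * W ^+ 2)) = 12 * W ^+ 4.
Proof. by ring. Qed.

Lemma FIVE (R : realType) (M : R) (S : 'M[R]_3) (f : nat -> 'cV[R]_3) (W eps sm c0 : R) :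
  1 < M -> S^T = S -> \det S = -1 -> 1 <= sm -> (forall i j, `|S i j| <= sm) ->
  (forall S' : 'M[R]_3, integral_form S' -> S' != 0 -> qdet S' != 0 ->
      qnorm (S - (cbrt (qdet S'))^-1 *: S') > c0 * powR (qnorm S') (- M)) ->
  1 <= W -> 0 <= eps ->
  (forall n, (n < 5)%N -> intv (f n)) ->
  (forall n, (n < 5)%N -> forall i, `|f n i 0| <= W) ->
  (forall n, (n < 5)%N -> `|qf S (f n)| <= eps) ->
  (forall n, (n < 5)%N -> f n != 0) ->
  (forall n m, (n < 5)%N -> (m < 5)%N -> n != m -> np (f n) (f m)) ->
  216 * W ^+ 8 * eps <= 36 * W ^+ 4 * sm ->
  6 * ((216 * W ^+ 8 * eps) * (36 * W ^+ 4 * sm) ^+ 2) < 1 ->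
  36 * (sm + 1) ^+ 2 * (10 ^+ 6 * W ^+ 16 * eps) <= 1 ->
  2 * (1 + 36 * (sm + 1) ^+ 3) * (72 * (10 ^+ 6 * W ^+ 20 * eps)) *
     powR (10 ^+ 6 * W ^+ 16) (M - 1) <= c0 ->
  False.
Proof.
move=> hM hS hdS hsm hSm hD hW eps0 hi hb hq hn hnp P1 P2 D1 D2.
have PLc := fun x y w k a1 a2 => @PLcase R S x y w k a1 a2 W sm eps hS hdS hSm.
have i1 := hi 0%N isT; have i2 := hi 1%N isT; have i3 := hi 2%N isT.
have i4 := hi 3%N isT; have i5 := hi 4%N isT.
have b1 := hb 0%N isT; have b2 := hb 1%N isT; have b3 := hb 2%N isT.
have b4 := hb 3%N isT; have b5 := hb 4%N isT.
have q1 := hq 0%N isT; have q2 := hq 1%N isT; have q3 := hq 2%N isT.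
have q4 := hq 3%N isT; have q5 := hq 4%N isT.
have hW4 := W34 hW.
have [D0|D0] := eqVneq (tri (f 0%N) (f 1%N) (f 2%N)) 0.
  have u0 : cross (f 0%N) (f 1%N) != 0.
    apply/eqP => h; have [t ht] := cross0 h (hn 1%N isT).
    by apply: (hnp 0%N 1%N isT isT isT); exists t.
  have ui := intv_cross i1 i2.
  have ub := bnd_cross b1 b2.
  have k1 : 1 <= dot (cross (f 0%N) (f 1%N)) (cross (f 0%N) (f 1%N)).
    by rewrite /dot -!expr2; apply: dot_ge1.
  have kb := dot_bnd ub ub; rewrite W44 in kb.
  have alb := dot_bnd (bnd_cross b3 b2) ub; rewrite W44 in alb.
  have beb := dot_bnd (bnd_cross b1 b3) ub; rewrite W44 in beb.
  have rel := case1_id (f 0%N) (f 1%N) (f 2%N); rewrite D0 scale0r addr0 in rel.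
  apply: (PLc _ _ _ _ _ _ i1 i2 hW b1 b2 _ _ _ kb alb beb rel _ _ u0 q1 q2 q3 P1 P2).
  - by apply: dot_int => //; apply: intv_cross.
  - by apply: dot_int => //; apply: intv_cross.
  - by rewrite gt_eqF // (lt_le_trans ltr01 k1).
  - exact: hnp.
  - exact: hnp.
pose A := Adj3 (f 0%N) (f 1%N) (f 2%N).
have vrel : forall w, tri (f 0%N) (f 1%N) (f 2%N) *: w =
    (A *m w) 0 0 *: f 0%N + (A *m w) 1 0 *: f 1%N + (A *m w) 2 0 *: f 2%N.
  by move=> w; rewrite -mk3_mul mulmxA mk3_adj mul_scalar_mx.
have Aint : intm A by apply: intm_Adj3.
have Ab : forall i j, `|A i j| <= 2 * W ^+ 2.
  move=> i j; rewrite /A mxE; case: ifP => _; [|case: ifP => _]; exact: bnd_cross.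
have vint : forall n, (n < 5)%N -> forall i, (A *m f n) i 0 \is a Num.int.
  move=> n hn5 i; apply: intm_mul => // k l; rewrite (ord1 l); exact: hi.
have vbnd : forall n, (n < 5)%N -> forall i, `|(A *m f n) i 0| <= 12 * W ^+ 4.
  move=> n hn5 i; apply: le_trans (bnd_mulmx Ab (b := W) _ i 0) _.
    by move=> k l; rewrite (ord1 l); apply: hb.
  by apply: le_trans hW4; rewrite le_eqVlt; apply/orP; left; apply/eqP; ring.
have Db : `|tri (f 0%N) (f 1%N) (f 2%N)| <= 12 * W ^+ 4.
  by apply: le_trans hW4; apply: bnd_tri.
have c23 : cross (f 1%N) (f 2%N) != 0 by apply: contra D0 => /eqP /tri_c23 ->.
have c13 : cross (f 0%N) (f 2%N) != 0 by apply: contra D0 => /eqP /tri_c13 ->.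
have c12 : cross (f 0%N) (f 1%N) != 0 by apply: contra D0 => /eqP /tri_c12 ->.
have allnz : forall n, (n == 3%N) || (n == 4%N) ->
    [/\ (A *m f n) 0 0 != 0, (A *m f n) 1 0 != 0 & (A *m f n) 2 0 != 0].
  move=> n hn34.
  have hn5 : (n < 5)%N by case/orP: hn34 => /eqP ->.
  have n0 : n != 0%N by case/orP: hn34 => /eqP ->.
  have n1 : n != 1%N by case/orP: hn34 => /eqP ->.
  have n2 : n != 2%N by case/orP: hn34 => /eqP ->.
  have rl := vrel (f n).
  split; apply/eqP => hz; rewrite hz scale0r ?add0r ?addr0 in rl.
  - apply: (PLc _ _ _ _ _ _ i2 i3 hW b2 b3 (vint n hn5 1) (vint n hn5 2) D0 Db
      (vbnd n hn5 1) (vbnd n hn5 2) rl _ _ c23 q2 q3 (hq n hn5) P1 P2);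
    exact: hnp.
  - apply: (PLc _ _ _ _ _ _ i1 i3 hW b1 b3 (vint n hn5 0) (vint n hn5 2) D0 Db
      (vbnd n hn5 0) (vbnd n hn5 2) rl _ _ c13 q1 q3 (hq n hn5) P1 P2);
    exact: hnp.
  - apply: (PLc _ _ _ _ _ _ i1 i2 hW b1 b2 (vint n hn5 0) (vint n hn5 1) D0 Db
      (vbnd n hn5 0) (vbnd n hn5 1) rl _ _ c12 q1 q2 (hq n hn5) P1 P2);
    exact: hnp.
have [p0 p1 p2] := allnz 3%N isT.
have [r0 r1 r2] := allnz 4%N isT.
have hc : cross (avec (A *m f 3%N)) (avec (A *m f 4%N)) != 0.
  apply/eqP => hc; have [t ht] := cprop p0 p1 p2 r0 r2 hc.
  apply: (hnp 4%N 3%N isT isT isT).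
  apply: (prop_of (k := tri (f 0%N) (f 1%N) (f 2%N)) (a := t * tri (f 0%N) (f 1%N) (f 2%N))) => //.
  by rewrite -scalerA (vrel (f 3%N)) vrel ht !mxE !scalerDr !scalerA.
have [S' [mu [sig [hS's [hS'i [sig1 [sigb [hS'b hE]]]]]]]] :=
  FL hS i1 i2 i3 i4 i5 hW b1 b2 b3 b4 b5 q1 q2 q3 q4 q5 D0 hc.
exact: (DIO hM hS hdS hsm hSm hD hW eps0 hS's hS'i sig1 sigb hS'b hE D1 D2).
Qed.

From Stdlib Require Import Classical.

Definition goodL (R : realType) (P : 'cV[R]_3 -> Prop) (L : seq 'cV[R]_3) :=
  (forall u, u \in L -> P u) /\
  (forall n m, (n < size L)%N -> (m < size L)%N -> n != m -> np (nth 0 L n) (nth 0 L m)).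

Definition coversL (R : realType) (P : 'cV[R]_3 -> Prop) (L : seq 'cV[R]_3) :=
  forall v, P v -> exists2 u, u \in L & exists t : R, v = t *: u.

Lemma comb_step (R : realType) (P : 'cV[R]_3 -> Prop) :
  (forall v, P v -> v != 0) ->
  forall k, exists L, goodL P L /\ (size L <= k)%N /\ (size L = k \/ coversL P L).
Proof.
move=> hnz; elim=> [|k [L [[hP hnp] [hs hor]]]].
  by exists [::]; split; [split => // n m|split => //; left].
have [cov|ncov] := classic (coversL P L).
  exists L; split; first by [].
  by split; [apply: leqW|right].
case: hor => // hsz.
have [v [Pv nv]] : exists v, P v /\ ~ (exists2 u, u \in L & exists t : R, v = t *: u).
  apply: NNPP => H; apply: ncov => v Pv; apply: NNPP => H2; apply: H; exists v; split => //.
exists (rcons L v); split; last by rewrite size_rcons hsz; split => //; left.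
split.
  by move=> u; rewrite mem_rcons in_cons => /orP[/eqP ->|/hP].
move=> n m; rewrite size_rcons !ltnS !nth_rcons => hn hm hnm.
have nvL : forall j, (j < size L)%N -> np v (nth 0 L j).
  by move=> j hj [t ht]; apply: nv; exists (nth 0 L j) => //; [apply: mem_nth | exists t].
move: hn hm; rewrite [(n <= _)%N]leq_eqVlt [(m <= _)%N]leq_eqVlt => /orP[/eqP en|ln] /orP[/eqP em|lm].
- by move: hnm; rewrite en em eqxx.
- rewrite en ltnn eqxx lm; exact: nvL.
- rewrite em ltnn eqxx ln => -[t ht].
  have Lnz : nth 0 L n != 0 by apply: hnz; apply: hP; apply: mem_nth.
  have t0 : t != 0 by apply: contra Lnz => /eqP t0; rewrite ht t0 scale0r.
  apply: (nvL n ln); exists t^-1; by rewrite ht scalerA mulVf // scale1r.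
- by rewrite ln lm; apply: hnp.
Qed.

Lemma comb (R : realType) (P : 'cV[R]_3 -> Prop) :
  (forall v, P v -> v != 0) ->
  (forall f : nat -> 'cV[R]_3, (forall n, (n < 5)%N -> P (f n)) ->
      (forall n m, (n < 5)%N -> (m < 5)%N -> n != m -> np (f n) (f m)) -> False) ->
  exists L : seq 'cV[R]_3, (size L <= 12)%N /\ (forall u, u \in L -> u != 0) /\ coversL P L.
Proof.
move=> hnz h5; have [L [[hP hnp] [hs hor]]] := comb_step hnz 5.
exists L; split; first exact: leq_trans hs _.
split; first by move=> u /hP /hnz.
case: hor => // hsz; exfalso.
apply: (h5 (fun n => nth 0 L n)).
- by move=> n hn; apply: hP; apply: mem_nth; rewrite hsz.
- by move=> n m hn hm; apply: hnp; rewrite hsz.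
Qed.

Definition mxmax (R : realType) (X : 'M[R]_3) : R :=
  \big[Num.max/0]_(i < 3) \big[Num.max/0]_(j < 3) `|X i j|.

Lemma mxmax_ge (R : realType) (X : 'M[R]_3) i j : `|X i j| <= mxmax X.
Proof.
rewrite /mxmax; apply: le_trans (le_bigmax _ _ i).
exact: (le_bigmax _ (fun j => `|X i j|) j).
Qed.

Lemma mxmax_ge0 (R : realType) (X : 'M[R]_3) : 0 <= mxmax X.
Proof. exact: le_trans (normr_ge0 (X 0 0)) (mxmax_ge X 0 0). Qed.

Lemma vnorm_ge (R : realType) (v : 'cV[R]_3) i : `|v i 0| <= vnorm v.
Proof. exact: (le_bigmax _ (fun i => `|v i 0|) i). Qed.

Lemma vnorm0 (R : realType) : vnorm (0 : 'cV[R]_3) = 0.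
Proof.
apply/le_anti; rewrite (le_trans (normr_ge0 _) (vnorm_ge 0 0)) andbT.
by apply: bigmax_le => // i _; rewrite mxE normr0.
Qed.

Lemma S0_sym (R : realType) : (S0 R)^T = S0 R.
Proof.
apply/matrixP => i j; rewrite !mxE.
by case: (ord3_cases i) => ->; case: (ord3_cases j) => ->.
Qed.

Lemma S0_det (R : realType) : \det (S0 R) = -1.
Proof. rewrite det3 !mxE /=; ring. Qed.

Lemma powR_anti (R : realType) (r x a : R) : 0 < r -> r <= x -> 0 <= a ->
  powR x (- a) <= powR r (- a).
Proof.
move=> r0 rx a0; rewrite !powRN lef_pV2 ?posrE ?powR_gt0 //; last exact: lt_le_trans rx.
by apply: ge0_ler_powR => //; rewrite nnegrE ltW // (lt_le_trans r0 rx).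
Qed.

Lemma rp1 (R : realType) (r M : R) : 1 <= r -> 1 < M -> r ^+ 32 * powR r (- (50 * M)) <= 1.
Proof.
move=> hr hM; have r0 : 0 <= r by lra.
rewrite -powR_mulrn // -powRD; last by apply/implyP => _; apply/eqP => h; rewrite h in hr; lra.
apply: le_trans (ler_powR hr (_ : _ <= 0)) _; [lra | by rewrite powRr0].
Qed.

Lemma rp2 (R : realType) (r M : R) : 1 <= r -> 1 < M ->
  r ^+ 40 * powR (r ^+ 32) (M - 1) * powR r (- (50 * M)) <= 1.
Proof.
move=> hr hM; have r0 : 0 <= r by lra.
have rn0 : r != 0 by apply/eqP => h; rewrite h in hr; lra.
rewrite -!powR_mulrn // -powRrM -!powRD; try by apply/implyP => _.
apply: le_trans (ler_powR hr (_ : _ <= 0)) _; [lra | by rewrite powRr0].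
Qed.

Lemma eta_le (R : realType) (T A : R) : 0 <= T -> T <= A -> T * (1 / (2 + A)) < 1.
Proof.
move=> T0 TA; rewrite mul1r -/(T / (2 + A)) ltr_pdivrMr; lra.
Qed.

Lemma lat_w (R : realType) (g : 'M[R]_3) (v : 'cV[R]_3) : g \in unitmx ->
  in_lattice g v -> intv (invmx g *m v).
Proof.
move=> gu [wz ->] i; rewrite mulKmx // mxE; exact: intr_int.
Qed.

Lemma conds (R : realType) (sm W eps eta K3p Kc Y c0 Pw : R) :
  1 <= sm -> 1 <= W -> 0 <= eps -> 0 <= eta -> 0 <= K3p -> 0 <= Kc -> 0 <= Y -> 0 < c0 ->
  W ^+ 8 * eps <= W ^+ 16 * eps -> W ^+ 16 * eps <= K3p * eta ->
  W ^+ 20 * eps * Pw <= Y * eta ->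
  216 * K3p * eta < 1 ->
  6 * 216 * 1296 * sm ^+ 2 * K3p * eta < 1 ->
  36 * (sm + 1) ^+ 2 * 10 ^+ 6 * K3p * eta < 1 ->
  (144 * 10 ^+ 6) * (Kc * Y) / c0 * eta < 1 ->
  [/\ 216 * W ^+ 8 * eps <= 36 * W ^+ 4 * sm,
      6 * ((216 * W ^+ 8 * eps) * (36 * W ^+ 4 * sm) ^+ 2) < 1,
      36 * (sm + 1) ^+ 2 * (10 ^+ 6 * W ^+ 16 * eps) <= 1 &
      2 * Kc * (72 * (10 ^+ 6 * W ^+ 20 * eps)) * Pw <= c0].
Proof.
move=> hsm hW eps0 eta0 K0 Kc0 Y0 c0p h8 hX hY t1 t2 t3 t4.
have W4 : 1 <= W ^+ 4 by apply: exprn_ege1.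
have h : 1 <= W ^+ 4 * sm by rewrite -[1]mul1r; apply: ler_pM; lra.
have X := le_trans h8 hX.
have sq0 := sqr_ge0 sm.
have sq1 := sqr_ge0 (sm + 1).
split.
- have : 216 * (W ^+ 8 * eps) <= 216 * (K3p * eta) by apply: ler_wpM2l; lra.
  move: t1; rewrite -!mulrA; lra.
- have -> : 6 * ((216 * W ^+ 8 * eps) * (36 * W ^+ 4 * sm) ^+ 2)
      = (6 * 216 * 1296 * sm ^+ 2) * (W ^+ 16 * eps) by ring.
  apply: le_lt_trans _ t2; rewrite -[X in _ <= X]mulrA.
  by apply: ler_wpM2l _ hX; apply: mulr_ge0 _ sq0; lra.
- have -> : 36 * (sm + 1) ^+ 2 * (10 ^+ 6 * W ^+ 16 * eps)
      = (36 * (sm + 1) ^+ 2 * 10 ^+ 6) * (W ^+ 16 * eps) by ring.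
  apply: ltW; apply: le_lt_trans _ t3; rewrite -[X in _ <= X]mulrA.
  by apply: ler_wpM2l _ hX; apply: mulr_ge0; [apply: mulr_ge0 _ sq1|]; lra.
- have -> : 2 * Kc * (72 * (10 ^+ 6 * W ^+ 20 * eps)) * Pw
      = (144 * 10 ^+ 6 * Kc) * (W ^+ 20 * eps * Pw) by ring.
  have c0n : c0 != 0 by rewrite gt_eqF.
  have e : (144 * 10 ^+ 6) * (Kc * Y) / c0 * eta * c0 = (144 * 10 ^+ 6 * Kc) * (Y * eta).
    by field.
  apply: le_trans (ler_wpM2l _ hY) _; first by apply: mulr_ge0 => //; lra.
  rewrite -e; have : (144 * 10 ^+ 6) * (Kc * Y) / c0 * eta * c0 <= 1 * c0.
    by apply: ler_wpM2r; lra.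
  by rewrite mul1r.
Qed.

Unset Implicit Arguments.

Theorem lemma2p6 (R : realType) (M : R) (g : 'M[R]_3) :
  1 < M -> \det g = 1 ->
  diophantine_type M (g^T *m S0 R *m g) ->
  exists eta : R, 0 < eta < 1 /\
    forall r : R, 10 < r ->
      exists L : seq 'cV[R]_3,
        (size L <= 12)%N /\ (forall u, u \in L -> u != 0) /\
        forall v : 'cV[R]_3,
          in_lattice g v -> in_H eta M v -> r <= vnorm v < r ^+ 2 ->
          exists2 u, u \in L & exists t : R, v = t *: u.
Proof.
move=> hM hdg [c0 c0p hD].
set S := g^T *m S0 R *m g in hD *.
have hS : S^T = S by rewrite /S conj_sym // S0_sym.
have hdS : \det S = -1 by rewrite /S !det_mulmx det_tr hdg S0_det; ring.
pose sm := 1 + mxmax S.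
have hsm : 1 <= sm by rewrite /sm lerDl mxmax_ge0.
have hSm : forall i j, `|S i j| <= sm.
  by move=> i j; apply: le_trans (mxmax_ge S i j) _; rewrite /sm lerDr.
have gu : g \in unitmx by rewrite unitmxE hdg unitr1.
pose gi := invmx g.
pose kg := 1 + mxmax gi.
have gib : forall i j, `|gi i j| <= kg.
  by move=> i j; apply: le_trans (mxmax_ge gi i j) _; rewrite /kg lerDr.
have kg1 : 1 <= kg by rewrite /kg lerDl mxmax_ge0.
pose K3 := 3 * kg.
have K31 : 1 <= K3 by rewrite /K3; lra.
have K30 : 0 <= K3 by lra.
pose Kc := 1 + 36 * (sm + 1) ^+ 3.
have Kc0 : 0 <= Kc by rewrite /Kc; have := exprn_ge0 3 (_ : 0 <= sm + 1); lra.
pose Y := K3 ^+ 20 * powR (10 ^+ 6 * K3 ^+ 16) (M - 1).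
have Y0 : 0 <= Y by rewrite /Y mulr_ge0 ?powR_ge0 // exprn_ge0.
pose T1 := K3 ^+ 16 * (216 + 6 * 216 * 1296 * sm ^+ 2 + 36 * (sm + 1) ^+ 2 * 10 ^+ 6).
have T10 : 0 <= T1.
  apply: mulr_ge0; first exact: exprn_ge0.
  have := sqr_ge0 sm; have := sqr_ge0 (sm + 1); lra.
pose T2 := (144 * 10 ^+ 6) * (Kc * Y) / c0.
have T20 : 0 <= T2.
  apply: divr_ge0 (mulr_ge0 _ (mulr_ge0 Kc0 Y0)) (ltW c0p); lra.
pose A := T1 + T2.
have A0 : 0 <= A by apply: addr_ge0.
pose eta := 1 / (2 + A).
have eta0 : 0 < eta by rewrite /eta divr_gt0 //; lra.
exists eta; split.
  by rewrite eta0 /= /eta ltr_pdivrMr; lra.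
have etaT : forall T, 0 <= T -> T <= A -> T * eta < 1 by move=> T; apply: eta_le.
have K16 : 0 <= K3 ^+ 16 by apply: exprn_ge0.
have t1 : 216 * K3 ^+ 16 * eta < 1.
  apply: etaT; first by apply: mulr_ge0 _ K16; lra.
  rewrite /A /T1; have := sqr_ge0 sm; have := sqr_ge0 (sm + 1) => a b.
  have := mulr_ge0 K16 a; have := mulr_ge0 K16 b; lra.
have t2 : 6 * 216 * 1296 * sm ^+ 2 * K3 ^+ 16 * eta < 1.
  apply: etaT; first by apply: mulr_ge0 _ K16; apply: mulr_ge0 _ (sqr_ge0 _); lra.
  rewrite /A /T1; have := sqr_ge0 sm; have := sqr_ge0 (sm + 1) => a b.
  have := mulr_ge0 K16 a; have := mulr_ge0 K16 b; lra.
have t3 : 36 * (sm + 1) ^+ 2 * 10 ^+ 6 * K3 ^+ 16 * eta < 1.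
  apply: etaT; first by apply: mulr_ge0 _ K16; apply: mulr_ge0 (mulr_ge0 _ (sqr_ge0 _)) _; lra.
  rewrite /A /T1; have := sqr_ge0 sm; have := sqr_ge0 (sm + 1) => a b.
  have := mulr_ge0 K16 a; have := mulr_ge0 K16 b; lra.
have t4 : T2 * eta < 1 by apply: etaT T20 _; rewrite /A lerDr.
move=> r hr.
have r1 : 1 <= r by lra.
have r0 : 0 < r by lra.
pose W := K3 * r ^+ 2.
have W1 : 1 <= W.
  have := exprn_ege1 2 r1 => h2; rewrite /W -[1]mul1r; apply: ler_pM => //; lra.
have W0 : 0 <= W by lra.
pose eps := eta * powR r (- (50 * M)).
have eps0 : 0 <= eps by apply: mulr_ge0 (ltW eta0) (powR_ge0 _ _).
have hX : W ^+ 16 * eps <= K3 ^+ 16 * eta.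
  have -> : W ^+ 16 * eps = K3 ^+ 16 * eta * (r ^+ 32 * powR r (- (50 * M))).
    by rewrite /W /eps; ring.
  apply: le_trans (ler_wpM2l (mulr_ge0 K16 (ltW eta0)) (rp1 r1 hM)) _.
  by rewrite mulr1.
have hY : W ^+ 20 * eps * powR (10 ^+ 6 * W ^+ 16) (M - 1) <= Y * eta.
  have e1 : powR (10 ^+ 6 * W ^+ 16) (M - 1)
      = powR (10 ^+ 6 * K3 ^+ 16) (M - 1) * powR (r ^+ 32) (M - 1).
    have -> : 10 ^+ 6 * W ^+ 16 = (10 ^+ 6 * K3 ^+ 16) * r ^+ 32 by rewrite /W; ring.
    rewrite powRM; [by []|apply: mulr_ge0 _ K16; lra|exact: exprn_ge0 _ (ltW r0)].
  have -> : W ^+ 20 * eps * powR (10 ^+ 6 * W ^+ 16) (M - 1)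
    = Y * eta * (r ^+ 40 * powR (r ^+ 32) (M - 1) * powR r (- (50 * M))).
    by rewrite e1 /Y /W /eps; ring.
  apply: le_trans (ler_wpM2l (mulr_ge0 Y0 (ltW eta0)) (rp2 r1 hM)) _.
  by rewrite mulr1.
have hW8 : W ^+ 8 * eps <= W ^+ 16 * eps.
  apply: ler_wpM2r => //; rewrite (_ : 16 = 8 + 8)%N // exprD ler_peMr ?exprn_ge0 //.
  exact: exprn_ege1.
have [P1 P2 D1 D2] := conds hsm W1 eps0 (ltW eta0) K16 Kc0 Y0 c0p hW8 hX hY t1 t2 t3 t4.
pose P := fun v => in_lattice g v /\ in_H eta M v /\ r <= vnorm v < r ^+ 2.
have Pnz : forall v, P v -> v != 0.
  move=> v [_ [_ /andP[hv _]]]; apply/eqP => v0; rewrite v0 vnorm0 in hv.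
  by move: (lt_le_trans r0 hv); rewrite ltxx.
suff h5 : forall f : nat -> 'cV[R]_3, (forall n, (n < 5)%N -> P (f n)) ->
    (forall n m, (n < 5)%N -> (m < 5)%N -> n != m -> np (f n) (f m)) -> False.
  have [L [hL1 [hL2 hL3]]] := comb Pnz h5.
  exists L; split => //; split => //.
  by move=> v h1 h2 h3; apply: hL3.
move=> f hP hnpf.
pose w := fun n => gi *m f n.
have gw : forall n, g *m w n = f n by move=> n; rewrite /w mulKVmx.
have Pf : forall n, (n < 5)%N -> [/\ in_lattice g (f n), in_H eta M (f n),
    r <= vnorm (f n) & vnorm (f n) < r ^+ 2].
  by move=> n hn; have [a [b /andP[c d]]] := hP n hn; split.
apply: (@FIVE R M S w W eps sm c0 hM hS hdS hsm hSm hD W1 eps0 _ _ _ _ _ P1 P2 D1 D2).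
- by move=> n hn; have [la _ _ _] := Pf n hn; apply: lat_w.
- move=> n hn i; have [_ _ _ vb] := Pf n hn.
  apply: le_trans (bnd_mulmx gib (b := vnorm (f n)) _ i 0) _.
    by move=> k l; rewrite (ord1 l); apply: vnorm_ge.
  rewrite /W /K3 mulrA; apply: ler_wpM2l (ltW vb).
  by apply: mulr_ge0 (le_trans ler01 kg1); apply: ler0n.
- move=> n hn; have [_ hH hrv _] := Pf n hn.
  rewrite /S -qf_mul gw; apply: ltW; apply: lt_le_trans hH _.
  rewrite /eps; apply: ler_wpM2l; first exact: ltW eta0.
  apply: powR_anti => //.
  by apply: mulr_ge0; [apply: ler0n | apply: ltW; apply: lt_trans ltr01 hM].
- move=> n hn; apply/eqP => h; have := gw n; rewrite h mulmx0 => e.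
  have [_ _ hrv _] := Pf n hn; move: hrv; rewrite -e vnorm0 => hrv.
  by move: (lt_le_trans r0 hrv); rewrite ltxx.
- move=> n m hn hm hnm [t ht]; apply: (hnpf n m hn hm hnm); exists t.
  by rewrite -gw ht -scalemxAr gw.
Qed.
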